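(* Let $\alpha,a,b\in\mathbb{C}$ be such that none of $\alpha+a,\alpha-a,\alpha+b,\alpha-b$ belongs to $\{0,-1,-2,\ldots\}$. Then \[ \psi(\alpha+b)+\psi(\alpha-b)-\psi(\alpha+a)-\psi(\alpha-a)=\frac{(a^2-b^2)\bigl((1+\alpha)^2+\alpha^2-a^2-b^2\bigr)}{2(\alpha^2-a^2)(\alpha^2-b^2)}\; {}_8F_7\!\left(\left.{1,\,1,\,1\pm a\pm b,\,\frac{7+3\alpha}{5}\pm\sqrt{\frac{a^2+b^2}{5}-\left(\frac{1-\alpha}{5}\right)^2}\atop \frac32,\,1+\alpha\pm a,\,1+\alpha\pm b,\,\frac{2+3\alpha}{5}\pm\sqrt{\frac{a^2+b^2}{5}-\left(\frac{1-\alpha}{5}\right)^2}}\right|-\frac14\right). \]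
   Context: $\psi(z)=\frac{d}{dz}\log\Gamma(z)$ is the digamma function. ${}_pF_q\left(\left.{a_1,\ldots,a_p\atop b_1,\ldots,b_q}\right|z\right)=\sum_{n\ge0}\frac{(a_1)_n\cdots(a_p)_n}{(b_1)_n\cdots(b_q)_n}\frac{z^n}{n!}$ with $(x)_n=x(x+1)\cdots(x+n-1)$. A parameter written $u\pm v$ stands for the two parameters $u+v,u-v$, and $1\pm a\pm b$ stands for the four parameters $1+a+b,1+a-b,1-a+b,1-a-b$. *)

(* Defs.v *)
From Stdlib Require Import Reals List Factorial.
From Coquelicot Require Import Coquelicot.
Open Scope C_scope.

Definition natC (n : nat) : C := RtoC (INR n).

(** n^z for a positive integer n and complex z:  exp(z ln n)  *)
Definition cpow_nat (n : nat) (z : C) : C :=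
  RtoC (exp (Re z * ln (INR n))) *
  ((cos (Im z * ln (INR n)), sin (Im z * ln (INR n))) : C).

Fixpoint poch (x : C) (n : nat) : C :=
  match n with
  | O => 1
  | S m => poch x m * (x + natC m)
  end.

Definition gauss_seq (z : C) (n : nat) : C :=
  natC (fact n) * cpow_nat n z / poch z (S n).

(** Euler's Gamma function on C (Gauss limit formula; the limit exists
    for z not a nonpositive integer). *)
Definition Gamma (z : C) : C :=
  @lim C_CompleteNormedModule (filtermap (gauss_seq z) eventually).

Definition Gamma' (z : C) : C :=
  @lim C_CompleteNormedModule
    (filtermap (fun h : C => (Gamma (z + h) - Gamma z) / h) (@locally' C_UniformSpace (RtoC 0))).

Definition digamma (z : C) : C := Gamma' z / Gamma z.

Definition prodC (l : list C) : C := fold_right Cmult 1 l.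

Definition hyp_term (As Bs : list C) (z : C) (n : nat) : C :=
  prodC (map (fun a => poch a n) As) / prodC (map (fun b => poch b n) Bs)
  * (z ^ n) / natC (fact n).

Definition hypergeom (As Bs : list C) (z : C) : C :=
  @lim C_CompleteNormedModule
    (filtermap (fun N => @sum_n C_AbelianMonoid (hyp_term As Bs z) N) eventually).

Definition nonpos_int (x : C) : Prop := exists n : nat, x = - natC n.

(* Main.v *)
Require Import Defs.
From Stdlib Require Import Reals List Lra Lia ZArith Classical.
From Coquelicot Require Import Coquelicot.
Open Scope R_scope.

Open Scope R_scope.

Lemma mvt_bound (f f' : R -> R) (x M : R) :
  (forall c, derivable_pt_lim f c (f' c)) ->
  (forall c, Rabs c <= Rabs x -> Rabs (f' c) <= M) ->
  Rabs (f x - f 0) <= M * Rabs x.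
Proof.
  intros Hd Hb.
  destruct (Rtotal_order 0 x) as [Hx|[Hx|Hx]].
  - destruct (MVT_cor2 f f' 0 x Hx (fun c _ => Hd c)) as [c [Hc Hc2]].
    rewrite Hc, Rabs_mult. rewrite Rminus_0_r.
    apply Rmult_le_compat_r. apply Rabs_pos. apply Hb.
    rewrite !Rabs_pos_eq; lra.
  - subst. rewrite Rminus_diag, Rabs_R0. lra.
  - destruct (MVT_cor2 f f' x 0 Hx (fun c _ => Hd c)) as [c [Hc Hc2]].
    rewrite <- Rabs_Ropp, Ropp_minus_distr, Hc, Rabs_mult.
    replace (0 - x) with (- x) by ring. rewrite (Rabs_Ropp x).
    apply Rmult_le_compat_r. apply Rabs_pos. apply Hb.
    rewrite (Rabs_left x) by lra. rewrite (Rabs_left c) by lra. lra.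
Qed.

Lemma abs_sin_le t : Rabs (sin t) <= Rabs t.
Proof.
  pose proof (mvt_bound sin cos t 1 derivable_pt_lim_sin) as H.
  rewrite sin_0, Rminus_0_r, Rmult_1_l in H. apply H.
  intros c _. apply Rabs_le. pose proof (COS_bound c). lra.
Qed.

Lemma abs_cos_1 t : Rabs (cos t - 1) <= Rabs t * Rabs t.
Proof.
  pose proof (mvt_bound cos (fun c => - sin c) t (Rabs t)) as H.
  rewrite cos_0 in H. apply H.
  - intros c. apply derivable_pt_lim_cos.
  - intros c Hc. rewrite Rabs_Ropp. eapply Rle_trans. apply abs_sin_le. exact Hc.
Qed.

Lemma abs_cos_1' t : Rabs (cos t - 1) <= Rabs t.
Proof.
  pose proof (mvt_bound cos (fun c => - sin c) t 1) as H.
  rewrite cos_0, Rmult_1_l in H. apply H.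
  - intros c. apply derivable_pt_lim_cos.
  - intros c Hc. rewrite Rabs_Ropp. apply Rabs_le. pose proof (SIN_bound c). lra.
Qed.

Lemma abs_sin_id t : Rabs (sin t - t) <= Rabs t * Rabs t.
Proof.
  pose proof (mvt_bound (fun u => sin u - u) (fun c => cos c - 1) t (Rabs t)) as H.
  simpl in H. rewrite sin_0, Rminus_0_r, Rminus_0_r in H. apply H.
  - intros c. apply derivable_pt_lim_minus. apply derivable_pt_lim_sin. apply derivable_pt_lim_id.
  - intros c Hc. eapply Rle_trans. apply abs_cos_1'. exact Hc.
Qed.

Lemma abs_exp_1 t : Rabs (exp t - 1) <= Rabs t * exp (Rabs t).
Proof.
  pose proof (mvt_bound exp exp t (exp (Rabs t)) derivable_pt_lim_exp) as H.
  rewrite exp_0, Rmult_comm in H. apply H.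
  intros c Hc. rewrite Rabs_pos_eq by (left; apply exp_pos).
  destruct (Rle_lt_or_eq_dec _ _ (Rle_trans _ _ _ (Rle_abs c) Hc)) as [h|h].
  left; apply exp_increasing; exact h. rewrite h; lra.
Qed.

Lemma abs_exp_2 t : Rabs (exp t - 1 - t) <= Rabs t * Rabs t * exp (Rabs t).
Proof.
  pose proof (mvt_bound (fun u => exp u - 1 - u) (fun c => exp c - 1) t (Rabs t * exp (Rabs t))) as H.
  simpl in H. rewrite exp_0 in H. replace (1 - 1 - 0) with 0 in H by ring. rewrite Rminus_0_r in H.
  replace (Rabs t * Rabs t * exp (Rabs t)) with (Rabs t * exp (Rabs t) * Rabs t) by ring.
  apply H.
  - intros c. apply derivable_pt_lim_minus. 
    replace (exp c) with (exp c - 0) by ring.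
    apply derivable_pt_lim_minus. apply derivable_pt_lim_exp. apply derivable_pt_lim_const.
    apply derivable_pt_lim_id.
  - intros c Hc. eapply Rle_trans. apply abs_exp_1.
    apply Rmult_le_compat; try apply Rabs_pos; try (left; apply exp_pos); auto.
    destruct (Rle_lt_or_eq_dec _ _ Hc) as [h|h].
    left; apply exp_increasing; exact h. rewrite h; lra.
Qed.

Open Scope C_scope.

Lemma lim_gen {T} (G : (T -> Prop) -> Prop) {PG : ProperFilter G} (f : T -> C) (l : C) :
  (forall eps : posreal, G (fun x => Cmod (f x - l) < eps)%R) ->
  @lim C_CompleteNormedModule (filtermap f G) = l.
Proof.
  intros H.
  assert (Hb : forall eps : posreal, filtermap f G (ball l eps)).
  { intros eps. unfold filtermap. apply filter_imp with (2 := H eps).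
    intros x Hx. apply (@norm_compat1 C_AbsRing C_NormedModule). exact Hx. }
  assert (Hc : @cauchy C_UniformSpace (filtermap f G)).
  { intros eps. exists l. apply Hb. }
  symmetry. apply (@eq_close C_AbsRing C_NormedModule).
  intros eps.
  pose proof (@complete_cauchy C_CompleteNormedModule (filtermap f G) _ Hc (pos_div_2 eps)) as H1.
  pose proof (Hb (pos_div_2 eps)) as H2.
  unfold filtermap in H1, H2.
  destruct (filter_ex (F:=G) _ (filter_and _ _ H1 H2)) as [t0 [Ht1 Ht2]].
  set (t := f t0) in *.
  replace (pos eps) with (pos_div_2 eps + pos_div_2 eps)%R by (simpl; lra).
  apply ball_triangle with t. exact Ht2. apply ball_sym. exact Ht1.
Qed.

Definition Clim_seq (u : nat -> C) (l : C) :=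
  forall eps : posreal, exists N, forall n, (N <= n)%nat -> (Cmod (u n - l) < eps)%R.

Lemma lim_seq_C u l : Clim_seq u l -> @lim C_CompleteNormedModule (filtermap u eventually) = l.
Proof.
  intros H. apply (@lim_gen nat eventually _ u l). intros eps. destruct (H eps) as [N HN]. exists N. exact HN.
Qed.

Lemma locally'_C_proper (z : C) : ProperFilter (@locally' C_UniformSpace z).
Proof.
  constructor.
  - intros P [e He]. exists (z + RtoC (e/2)). apply He.
    + apply (@norm_compat1 C_AbsRing C_NormedModule).
      change (Cmod (z + RtoC (e/2) - z) < e)%R.
      replace (z + RtoC (e/2) - z) with (RtoC (e/2)) by ring.
      rewrite Cmod_R. destruct e as [e ep]; simpl. rewrite Rabs_pos_eq; lra.
    + intros Heq. assert (RtoC (e/2) = 0) as H0.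
      { rewrite <- (Cplus_0_r z) in Heq at 2. 
        apply (f_equal (fun w => w - z)) in Heq. 
        replace (z + RtoC (e/2) - z) with (RtoC (e/2)) in Heq by ring.
        rewrite Heq. ring. }
      apply (f_equal fst) in H0. simpl in H0. destruct e; simpl in *; lra.
  - apply locally'_filter.
Qed.

Lemma lim_loc' (f : C -> C) (l : C) :
  (forall eps : posreal, exists del : posreal, forall h : C, h <> 0 -> (Cmod h < del)%R -> (Cmod (f h - l) < eps)%R) ->
  @lim C_CompleteNormedModule (filtermap f (@locally' C_UniformSpace (RtoC 0))) = l.
Proof.
  intros H. apply (@lim_gen _ _ (locally'_C_proper _)).
  intros eps. destruct (H eps) as [d Hd].
  exists (pos_div_2 d). intros y Hy Hne. apply Hd. exact Hne.
  destruct Hy as [H1 H2].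
  change (Rabs (fst y + - 0) < d/2)%R in H1. change (Rabs (snd y + - 0) < d/2)%R in H2.
  rewrite Ropp_0, Rplus_0_r in H1, H2.
  eapply Rle_lt_trans. apply Cmod_2Rmax.
  assert (sqrt 2 < 2)%R.
  { rewrite <- (sqrt_square 2) at 2 by lra. apply sqrt_lt_1; lra. }
  pose proof (sqrt_pos 2). destruct d as [d dp]; simpl in *.
  apply Rmax_case; [pose proof (Rabs_pos (fst y)) | pose proof (Rabs_pos (snd y))]; nra.
Qed.

Open Scope C_scope.

Definition cexp (u : C) : C := RtoC (exp (Re u)) * ((cos (Im u), sin (Im u)) : C).

Lemma C_ext (x y : C) : fst x = fst y -> snd x = snd y -> x = y.
Proof. destruct x, y; simpl; intros; subst; auto. Qed.

Lemma cpow_nat_cexp n z : cpow_nat n z = cexp (z * RtoC (ln (INR n))).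
Proof.
  unfold cpow_nat, cexp.
  assert (E1 : Re (z * RtoC (ln (INR n))) = (Re z * ln (INR n))%R) by (destruct z; unfold Re; simpl; ring).
  assert (E2 : Im (z * RtoC (ln (INR n))) = (Im z * ln (INR n))%R) by (destruct z; unfold Im; simpl; ring).
  rewrite E1, E2. reflexivity.
Qed.

Lemma cexp_plus u v : cexp (u + v) = cexp u * cexp v.
Proof.
  unfold cexp, Re, Im. destruct u as [x y], v as [x' y']. simpl.
  rewrite exp_plus, cos_plus, sin_plus.
  apply C_ext; simpl; ring.
Qed.

Lemma cexp_0 : cexp 0 = 1.
Proof. unfold cexp, Re, Im; simpl. rewrite exp_0, cos_0, sin_0. apply C_ext; simpl; ring. Qed.

Lemma Cmod_le_sum (a b : R) : (Cmod (a, b) <= Rabs a + Rabs b)%R.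
Proof.
  unfold Cmod. simpl. rewrite <- (sqrt_square (Rabs a + Rabs b)).
  apply sqrt_le_1_alt. rewrite !Rmult_1_r.
  pose proof (Rabs_pos a). pose proof (Rabs_pos b).
  replace (a*a)%R with (Rabs a * Rabs a)%R by (rewrite <- Rabs_mult; apply Rabs_pos_eq; nra).
  replace (b*b)%R with (Rabs b * Rabs b)%R by (rewrite <- Rabs_mult; apply Rabs_pos_eq; nra).
  nra.
  pose proof (Rabs_pos a). pose proof (Rabs_pos b). lra.
Qed.

Lemma abs_fst_le (u : C) : (Rabs (fst u) <= Cmod u)%R.
Proof. eapply Rle_trans. 2: apply Rmax_Cmod. apply Rmax_l. Qed.
Lemma abs_snd_le (u : C) : (Rabs (snd u) <= Cmod u)%R.
Proof. eapply Rle_trans. 2: apply Rmax_Cmod. apply Rmax_r. Qed.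

Lemma cexp_bound u : (Cmod (cexp u - 1 - u) <= 4 * Cmod u * Cmod u * exp (Cmod u))%R.
Proof.
  destruct u as [x y].
  pose proof (abs_fst_le (x,y)) as Hx. pose proof (abs_snd_le (x,y)) as Hy. simpl in Hx, Hy.
  set (m := Cmod (x,y)) in *.
  assert (E : cexp (x, y) - 1 - (x, y) = ((exp x * cos y - 1 - x)%R, (exp x * sin y - y)%R)).
  { unfold cexp, Re, Im; simpl. apply C_ext; simpl; ring. }
  rewrite E. eapply Rle_trans. apply Cmod_le_sum.
  assert (Hex : (exp x <= exp m)%R).
  { destruct (Rle_lt_or_eq_dec _ _ (Rle_trans _ _ _ (Rle_abs x) Hx)) as [h|h].
    left; apply exp_increasing; exact h. rewrite h; lra. }
  assert (Hex' : (exp (Rabs x) <= exp m)%R).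
  { destruct (Rle_lt_or_eq_dec _ _ Hx) as [h|h].
    left; apply exp_increasing; exact h. rewrite h; lra. }
  pose proof (exp_pos x). pose proof (exp_pos (Rabs x)). pose proof (Rabs_pos x). pose proof (Rabs_pos y).
  assert (K1 : (Rabs (exp x * cos y - 1 - x) <= Rabs x * Rabs x * exp (Rabs x) + exp x * (Rabs y * Rabs y))%R).
  { replace (exp x * cos y - 1 - x)%R with ((exp x - 1 - x) + exp x * (cos y - 1))%R by ring.
    eapply Rle_trans. apply Rabs_triang. apply Rplus_le_compat. apply abs_exp_2.
    rewrite Rabs_mult, (Rabs_pos_eq (exp x)) by lra. apply Rmult_le_compat_l. lra. apply abs_cos_1. }
  assert (K2 : (Rabs (exp x * sin y - y) <= Rabs x * exp (Rabs x) * Rabs y + Rabs y * Rabs y)%R).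
  { replace (exp x * sin y - y)%R with ((exp x - 1) * sin y + (sin y - y))%R by ring.
    eapply Rle_trans. apply Rabs_triang. apply Rplus_le_compat. 2: apply abs_sin_id.
    rewrite Rabs_mult. apply Rmult_le_compat; try apply Rabs_pos. apply abs_exp_1. apply abs_sin_le. }
  assert (Hm : (0 <= m)%R) by lra.
  assert (Hxx : (Rabs x * Rabs x <= m * m)%R) by nra.
  assert (Hyy : (Rabs y * Rabs y <= m * m)%R) by nra.
  assert (Hxy : (Rabs x * Rabs y <= m * m)%R) by nra.
  pose proof (exp_pos m).
  assert (A1 : (Rabs x * Rabs x * exp (Rabs x) <= m*m*exp m)%R) by (apply Rmult_le_compat; nra).
  assert (A2 : (exp x * (Rabs y * Rabs y) <= m*m*exp m)%R) by (rewrite Rmult_comm; apply Rmult_le_compat; nra).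
  assert (A3 : (Rabs x * exp (Rabs x) * Rabs y <= m*m*exp m)%R).
  { replace (Rabs x * exp (Rabs x) * Rabs y)%R with (Rabs x * Rabs y * exp (Rabs x))%R by ring.
    apply Rmult_le_compat; nra. }
  assert (A4 : (Rabs y * Rabs y <= m*m*exp m)%R).
  { assert (1 <= exp m)%R. { rewrite <- exp_0. destruct (Rle_lt_or_eq_dec _ _ Hm) as [h|h]. left; apply exp_increasing; auto. rewrite h; lra. }
    nra. }
  lra.
Qed.

Lemma Cmod_cexp u : Cmod (cexp u) = exp (Re u).
Proof.
  unfold cexp. rewrite Cmod_mult, Cmod_R, Rabs_pos_eq by (left; apply exp_pos).
  unfold Cmod; simpl. rewrite !Rmult_1_r.
  replace (cos (Im u) * cos (Im u) + sin (Im u) * sin (Im u))%R with 1%R.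
  rewrite sqrt_1. ring. pose proof (sin2_cos2 (Im u)). unfold Rsqr in H. lra.
Qed.

Lemma cexp_neq0 u : cexp u <> 0.
Proof.
  intros H. apply (f_equal Cmod) in H. rewrite Cmod_cexp, Cmod_0 in H. pose proof (exp_pos (Re u)). lra.
Qed.

Open Scope C_scope.
Section DSec.
Implicit Types (u v : nat -> C) (a b c l : C).

Lemma Cmod_sub_sym (x y : C) : Cmod (x - y) = Cmod (y - x).
Proof. replace (x - y) with (- (y - x)) by ring. apply Cmod_opp. Qed.

Lemma Cmod_tri3 (x y z : C) : (Cmod (x + y + z) <= Cmod x + Cmod y + Cmod z)%R.
Proof. eapply Rle_trans. apply Cmod_triangle. pose proof (Cmod_triangle x y). lra. Qed.

Lemma Cmod_sub_le (x y : C) : (Cmod x - Cmod y <= Cmod (x - y))%R.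
Proof. pose proof (Cmod_triangle (x - y) y). replace (x - y + y) with x in H by ring. lra. Qed.

Lemma Cmod_minus_tri (x y : C) : (Cmod (x - y) <= Cmod x + Cmod y)%R.
Proof. unfold Cminus. eapply Rle_trans. apply Cmod_triangle. rewrite Cmod_opp. lra. Qed.

Lemma Clim_ext u v l : (forall n, u n = v n) -> Clim_seq u l -> Clim_seq v l.
Proof. intros E H eps. destruct (H eps) as [N HN]. exists N. intros n Hn. rewrite <- E. auto. Qed.

Lemma Clim_ext_ev u v l N0 : (forall n, (N0 <= n)%nat -> u n = v n) -> Clim_seq u l -> Clim_seq v l.
Proof. intros E H eps. destruct (H eps) as [N HN]. exists (max N N0). intros n Hn. rewrite <- E by lia. apply HN; lia. Qed.

Lemma Clim_const c : Clim_seq (fun _ => c) c.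
Proof. intros eps. exists O. intros. replace (c - c) with (RtoC 0) by ring. rewrite Cmod_0. apply cond_pos. Qed.

Lemma Clim_shift u l : Clim_seq (fun n => u (S n)) l -> Clim_seq u l.
Proof. intros H eps. destruct (H eps) as [N HN]. exists (S N). intros n Hn. destruct n. lia. apply HN. lia. Qed.

Lemma Clim_shift' u l : Clim_seq u l -> Clim_seq (fun n => u (S n)) l.
Proof. intros H eps. destruct (H eps) as [N HN]. exists N. intros n Hn. apply HN. lia. Qed.

Lemma Clim_unique u l1 l2 : Clim_seq u l1 -> Clim_seq u l2 -> l1 = l2.
Proof.
  intros H1 H2. cut (l1 - l2 = 0). { intros Z. replace l1 with (l1 - l2 + l2) by ring. rewrite Z. ring. }
  apply Cmod_eq_0.
  apply Rle_antisym. 2: apply Cmod_ge_0.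
  apply Rnot_lt_le. intros Hp.
  destruct (H1 (mkposreal _ (ltac:(lra) : (0 < (Cmod (l1 - l2)) / 2)%R))) as [N1 K1].
  destruct (H2 (mkposreal _ (ltac:(lra) : (0 < (Cmod (l1 - l2)) / 2)%R))) as [N2 K2].
  specialize (K1 (max N1 N2) ltac:(lia)). specialize (K2 (max N1 N2) ltac:(lia)). simpl in *.
  pose proof (Cmod_triangle (u (max N1 N2) - l2) (l1 - u (max N1 N2))).
  replace (u (max N1 N2) - l2 + (l1 - u (max N1 N2))) with (l1 - l2) in H by ring.
  rewrite Cmod_sub_sym in K1. unfold Rdiv in *. lra.
Qed.

Lemma Clim_plus u v a b : Clim_seq u a -> Clim_seq v b -> Clim_seq (fun n => u n + v n) (a + b).
Proof.
  intros Hu Hv eps. destruct (Hu (pos_div_2 eps)) as [N1 K1]. destruct (Hv (pos_div_2 eps)) as [N2 K2].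
  exists (max N1 N2). intros n Hn. specialize (K1 n ltac:(lia)). specialize (K2 n ltac:(lia)).
  replace (u n + v n - (a + b)) with ((u n - a) + (v n - b)) by ring.
  eapply Rle_lt_trans. apply Cmod_triangle. simpl in *. lra.
Qed.

Lemma Clim_opp u a : Clim_seq u a -> Clim_seq (fun n => - u n) (- a).
Proof.
  intros Hu eps. destruct (Hu eps) as [N K]. exists N. intros n Hn.
  replace (- u n - - a) with (- (u n - a)) by ring. rewrite Cmod_opp. auto.
Qed.

Lemma Clim_minus u v a b : Clim_seq u a -> Clim_seq v b -> Clim_seq (fun n => u n - v n) (a - b).
Proof. intros. apply Clim_plus; auto. apply Clim_opp; auto. Qed.

Lemma Clim_bounded u a : Clim_seq u a -> exists M, (0 < M)%R /\ forall n, (Cmod (u n) <= M)%R.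
Proof.
  intros H. destruct (H (mkposreal 1 Rlt_0_1)) as [N K].
  assert (exists M0, (0 < M0)%R /\ forall n, (n < N)%nat -> (Cmod (u n) <= M0)%R) as [M0 [HM0 KM0]].
  { clear K. induction N.
    - exists 1%R. split. lra. intros; lia.
    - destruct IHN as [M0 [HM0 KM0]]. exists (Rmax M0 (Cmod (u N))). split.
      eapply Rlt_le_trans. exact HM0. apply Rmax_l.
      intros n Hn. destruct (Nat.eq_dec n N). subst. apply Rmax_r.
      eapply Rle_trans. apply KM0. lia. apply Rmax_l. }
  exists (Rmax M0 (Cmod a + 1)). split. eapply Rlt_le_trans. exact HM0. apply Rmax_l.
  intros n. destruct (Compare_dec.le_lt_dec N n).
  - specialize (K n l). simpl in K. eapply Rle_trans. 2: apply Rmax_r.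
    pose proof (Cmod_triangle (u n - a) a). replace (u n - a + a) with (u n) in H0 by ring. lra.
  - eapply Rle_trans. apply KM0; auto. apply Rmax_l.
Qed.

Lemma Clim_mult u v a b : Clim_seq u a -> Clim_seq v b -> Clim_seq (fun n => u n * v n) (a * b).
Proof.
  intros Hu Hv. destruct (Clim_bounded v b Hv) as [M [HM KM]].
  intros eps.
  set (e1 := (eps / (2 * M))%R). set (e2 := (eps / (2 * (Cmod a + 1)))%R).
  assert (He1 : (0 < e1)%R). { unfold e1. apply Rdiv_lt_0_compat. apply cond_pos. lra. }
  assert (He2 : (0 < e2)%R). { unfold e2. apply Rdiv_lt_0_compat. apply cond_pos. pose proof (Cmod_ge_0 a). lra. }
  destruct (Hu (mkposreal _ He1)) as [N1 K1]. destruct (Hv (mkposreal _ He2)) as [N2 K2].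
  exists (max N1 N2). intros n Hn. specialize (K1 n ltac:(lia)). specialize (K2 n ltac:(lia)). simpl in *.
  replace (u n * v n - a * b) with ((u n - a) * v n + a * (v n - b)) by ring.
  eapply Rle_lt_trans. apply Cmod_triangle. rewrite !Cmod_mult.
  pose proof (Cmod_ge_0 a). pose proof (Cmod_ge_0 (u n - a)). pose proof (Cmod_ge_0 (v n - b)).
  pose proof (KM n).
  assert (P1 : (Cmod (u n - a) * Cmod (v n) <= e1 * M)%R). { apply Rmult_le_compat; try lra. apply Cmod_ge_0. }
  assert (P2 : (Cmod a * Cmod (v n - b) <= (Cmod a + 1) * e2)%R). { apply Rmult_le_compat; try lra. }
  assert (P3 : (Cmod a * Cmod (v n - b) < (Cmod a + 1) * e2)%R).
  { destruct (Req_dec (Cmod a) 0) as [Z|Z]. rewrite Z. nra. apply Rlt_le_trans with (Cmod a * e2)%R. apply Rmult_lt_compat_l; lra. nra. }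
  assert (e1 * M = eps / 2)%R. { unfold e1. field. lra. }
  assert ((Cmod a + 1) * e2 = eps / 2)%R. { unfold e2. field. lra. }
  lra.
Qed.

Lemma Clim_scal c u a : Clim_seq u a -> Clim_seq (fun n => c * u n) (c * a).
Proof. intros. apply Clim_mult; auto. apply Clim_const. Qed.

Lemma Clim_inv u a : a <> 0 -> Clim_seq u a -> Clim_seq (fun n => / u n) (/ a).
Proof.
  intros Ha Hu.
  assert (Hpa : (0 < Cmod a)%R). { pose proof (Cmod_ge_0 a) as G0. destruct (Req_dec (Cmod a) 0) as [G1|G1]. apply Cmod_eq_0 in G1. contradiction. lra. }
  destruct (Hu (mkposreal _ (ltac:(lra) : (0 < Cmod a / 2)%R))) as [N0 K0]. simpl in K0.
  assert (Hlow : forall n, (N0 <= n)%nat -> (Cmod a / 2 <= Cmod (u n))%R).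
  { intros n Hn. specialize (K0 n Hn). pose proof (Cmod_sub_le a (a - u n)). replace (a - (a - u n)) with (u n) in H by ring.
    rewrite Cmod_sub_sym in K0. lra. }
  intros eps.
  set (e := (eps * (Cmod a * Cmod a / 2))%R).
  assert (He : (0 < e)%R). { unfold e. apply Rmult_lt_0_compat. apply cond_pos. nra. }
  destruct (Hu (mkposreal _ He)) as [N1 K1].
  exists (max N0 N1). intros n Hn. specialize (K1 n ltac:(lia)). specialize (Hlow n ltac:(lia)). simpl in K1.
  assert (Hun : u n <> 0). { intros Z. rewrite Z, Cmod_0 in Hlow. lra. }
  replace (/ u n - / a) with ((a - u n) / (u n * a)) by (field; auto).
  rewrite Cmod_div, Cmod_mult by (apply Cmult_neq_0; auto).
  rewrite Cmod_sub_sym.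
  apply Rlt_le_trans with (e / (Cmod a / 2 * Cmod a))%R.
  - unfold Rdiv. apply Rle_lt_trans with (Cmod (u n - a) * / (Cmod a / 2 * Cmod a))%R.
    + apply Rmult_le_compat_l. apply Cmod_ge_0. apply Rinv_le_contravar. nra. apply Rmult_le_compat_r; lra.
    + apply Rmult_lt_compat_r. apply Rinv_0_lt_compat. nra. exact K1.
  - unfold e. right. field. lra.
Qed.

Lemma Clim_div u v a b : b <> 0 -> Clim_seq u a -> Clim_seq v b -> Clim_seq (fun n => u n / v n) (a / b).
Proof. intros. apply Clim_mult; auto. apply Clim_inv; auto. Qed.

Lemma Clim_le u a (v : C) (M : R) : Clim_seq u a -> (exists N, forall n, (N <= n)%nat -> (Cmod (u n - v) <= M)%R) -> (Cmod (a - v) <= M)%R.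
Proof.
  intros H [N0 K]. apply Rnot_lt_le. intros Hlt.
  assert (Hp : (0 < Cmod (a - v) - M)%R) by lra.
  destruct (H (mkposreal _ Hp)) as [N1 K1]. specialize (K1 (max N0 N1) ltac:(lia)). specialize (K (max N0 N1) ltac:(lia)).
  simpl in K1. pose proof (Cmod_triangle (a - u (max N0 N1)) (u (max N0 N1) - v)).
  replace (a - u (max N0 N1) + (u (max N0 N1) - v)) with (a - v) in H0 by ring.
  rewrite Cmod_sub_sym in K1. lra.
Qed.

Lemma ball_of_Cmod (x y : C) (eps : R) : (Cmod (y - x) < eps)%R -> @ball C_UniformSpace x eps y.
Proof. intros H. apply (@norm_compat1 C_AbsRing C_NormedModule). exact H. Qed.

Lemma Cmod_of_ball (x y : C) (eps : R) : @ball C_UniformSpace x (eps/2) y -> (Cmod (y - x) < eps)%R.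
Proof.
  intros [H1 H2].
  change (Rabs (fst y + - fst x) < eps/2)%R in H1. change (Rabs (snd y + - snd x) < eps/2)%R in H2.
  eapply Rle_lt_trans. apply Cmod_2Rmax.
  assert (sqrt 2 < 2)%R.
  { rewrite <- (sqrt_square 2) at 2 by lra. apply sqrt_lt_1; lra. }
  pose proof (sqrt_pos 2). simpl.
  apply Rmax_case; [pose proof (Rabs_pos (fst y + - fst x)) | pose proof (Rabs_pos (snd y + - snd x))]; nra.
Qed.

Lemma Cauchy_C (u : nat -> C) :
  (forall eps : posreal, exists N, forall m n, (N <= m)%nat -> (N <= n)%nat -> (Cmod (u m - u n) < eps)%R) ->
  exists l, Clim_seq u l.
Proof.
  intros H.
  destruct (proj1 (@filterlim_locally_cauchy nat C_CompleteNormedModule eventually _ u)) as [l Hl].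
  - intros eps. destruct (H eps) as [N K]. exists (fun n => (N <= n)%nat). split. exists N; auto.
    intros m n Hm Hn. apply ball_of_Cmod. apply K; auto.
  - exists l. intros eps. 
    destruct (proj1 (@filterlim_locally nat C_UniformSpace eventually _ u l) Hl (pos_div_2 eps)) as [N K].
    exists N. intros n Hn. apply Cmod_of_ball. apply K. auto.
Qed.

End DSec.

Open Scope C_scope.

Fixpoint cprod (f : nat -> C) (n : nat) : C := match n with O => 1 | S m => cprod f m * f m end.
Fixpoint csum (f : nat -> C) (n : nat) : C := match n with O => 0 | S m => csum f m + f m end.
Fixpoint rsum (f : nat -> R) (n : nat) : R := match n with O => 0%R | S m => (rsum f m + f m)%R end.

Lemma csum_ext f g n : (forall k, (k < n)%nat -> f k = g k) -> csum f n = csum g n.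
Proof. induction n; simpl; intros H; auto. rewrite IHn, H; auto. Qed.
Lemma cprod_ext f g n : (forall k, (k < n)%nat -> f k = g k) -> cprod f n = cprod g n.
Proof. induction n; simpl; intros H; auto. rewrite IHn, H; auto. Qed.
Lemma rsum_ext f g n : (forall k, (k < n)%nat -> f k = g k) -> rsum f n = rsum g n.
Proof. induction n; simpl; intros H; auto. rewrite IHn, H; auto. Qed.
Lemma rsum_le f g n : (forall k, (k < n)%nat -> (f k <= g k)%R) -> (rsum f n <= rsum g n)%R.
Proof. induction n; simpl; intros H. lra. pose proof (H n ltac:(lia)). pose proof (IHn ltac:(auto)). lra. Qed.
Lemma rsum_nonneg f n : (forall k, (0 <= f k)%R) -> (0 <= rsum f n)%R.
Proof. intros H; induction n; simpl. lra. pose proof (H n). lra. Qed.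

Lemma cprod_split f m n : cprod f (m + n) = cprod f m * cprod (fun j => f (m + j)%nat) n.
Proof. induction n; simpl. rewrite Nat.add_0_r. ring. rewrite Nat.add_succ_r. simpl. rewrite IHn. ring. Qed.
Lemma csum_split f m n : csum f (m + n) = csum f m + csum (fun j => f (m + j)%nat) n.
Proof. induction n; simpl. rewrite Nat.add_0_r. ring. rewrite Nat.add_succ_r. simpl. rewrite IHn. ring. Qed.
Lemma rsum_split f m n : rsum f (m + n) = (rsum f m + rsum (fun j => f (m + j)%nat) n)%R.
Proof. induction n; simpl. rewrite Nat.add_0_r. ring. rewrite Nat.add_succ_r. simpl. rewrite IHn. ring. Qed.

Lemma csum_plus f g n : csum (fun k => f k + g k) n = csum f n + csum g n.
Proof. induction n; simpl. ring. rewrite IHn. ring. Qed.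
Lemma csum_scal c f n : csum (fun k => c * f k) n = c * csum f n.
Proof. induction n; simpl. ring. rewrite IHn. ring. Qed.
Lemma csum_opp f n : csum (fun k => - f k) n = - csum f n.
Proof. induction n; simpl. ring. rewrite IHn. ring. Qed.
Lemma csum_minus f g n : csum (fun k => f k - g k) n = csum f n - csum g n.
Proof. induction n; simpl. ring. rewrite IHn. ring. Qed.
Lemma cprod_mult f g n : cprod (fun k => f k * g k) n = cprod f n * cprod g n.
Proof. induction n; simpl. ring. rewrite IHn. ring. Qed.
Lemma csum_tele f n : csum (fun k => f k - f (S k)) n = f O - f n.
Proof. induction n; simpl. ring. rewrite IHn. ring. Qed.

Lemma Cmod_csum f n : (Cmod (csum f n) <= rsum (fun k => Cmod (f k)) n)%R.
Proof. induction n; simpl. rewrite Cmod_0. lra. eapply Rle_trans. apply Cmod_triangle. lra. Qed.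

Lemma exp_ge_1p t : (1 + t <= exp t)%R.
Proof.
  destruct (Rtotal_order t 0) as [h|[h|h]].
  - destruct (MVT_cor2 (fun u => exp u - 1 - u)%R (fun c => exp c - 1)%R t 0 h) as [c [Hc Hc2]].
    { intros c _. apply derivable_pt_lim_minus. replace (exp c) with (exp c - 0)%R by ring.
      apply derivable_pt_lim_minus. apply derivable_pt_lim_exp. apply derivable_pt_lim_const. apply derivable_pt_lim_id. }
    simpl in Hc. rewrite exp_0 in Hc. assert (exp c < 1)%R by (rewrite <- exp_0; apply exp_increasing; lra).
    assert (0 < (1 - exp c) * (0 - t))%R by (apply Rmult_lt_0_compat; lra). lra.
  - subst. rewrite exp_0. lra.
  - left. apply exp_ineq1. lra.
Qed.

Lemma prod_F3 (w : nat -> C) n :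
  (Cmod (cprod (fun k => 1 + w k) n - 1 - csum w n)%C <=
   exp (rsum (fun k => Cmod (w k)) n) - 1 - rsum (fun k => Cmod (w k)) n)%R.
Proof.
  induction n; simpl.
  - replace (1 - 1 - 0) with (RtoC 0) by ring. rewrite Cmod_0, exp_0. lra.
  - set (P := cprod (fun k => 1 + w k) n) in *. set (S := csum w n) in *.
    set (s := rsum (fun k => Cmod (w k)) n) in *.
    replace (P * (1 + w n) - 1 - (S + w n)) with ((P - 1 - S) + w n * (P - 1)) by ring.
    eapply Rle_trans. apply Cmod_triangle. rewrite Cmod_mult.
    assert (HP1 : (Cmod (P - 1) <= exp s - 1)%R).
    { replace (P - 1) with ((P - 1 - S) + S) by ring. eapply Rle_trans. apply Cmod_triangle.
      pose proof (Cmod_csum w n). fold S s in H. lra. }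
    rewrite exp_plus. pose proof (exp_ge_1p (Cmod (w n))). pose proof (exp_pos s).
    pose proof (Cmod_ge_0 (w n)).
    assert (Cmod (w n) * Cmod (P - 1) <= Cmod (w n) * (exp s - 1))%R by (apply Rmult_le_compat_l; lra).
    nra.
Qed.

Lemma exp_m1_le s : (0 <= s)%R -> (exp s - 1 <= s * exp s)%R.
Proof. intros H. pose proof (abs_exp_1 s). rewrite (Rabs_pos_eq s) in H0 by lra. pose proof (Rle_abs (exp s - 1)). lra. Qed.
Lemma exp_m2_le s : (0 <= s)%R -> (exp s - 1 - s <= s * s * exp s)%R.
Proof. intros H. pose proof (abs_exp_2 s). rewrite (Rabs_pos_eq s) in H0 by lra. pose proof (Rle_abs (exp s - 1 - s)). lra. Qed.

Lemma prod_m1 (w : nat -> C) n :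
  (Cmod (cprod (fun k => 1 + w k) n - 1)%C <= exp (rsum (fun k => Cmod (w k)) n) - 1)%R.
Proof.
  pose proof (prod_F3 w n). pose proof (Cmod_csum w n).
  replace (cprod (fun k => 1 + w k) n - 1) with ((cprod (fun k => 1 + w k) n - 1 - csum w n) + csum w n) by ring.
  eapply Rle_trans. apply Cmod_triangle. lra.
Qed.

Lemma prod_bound (w : nat -> C) n :
  (Cmod (cprod (fun k => 1 + w k) n)%C <= exp (rsum (fun k => Cmod (w k)) n))%R.
Proof.
  pose proof (prod_m1 w n).
  replace (cprod (fun k => 1 + w k) n) with ((cprod (fun k => 1 + w k) n - 1) + 1) by ring.
  eapply Rle_trans. apply Cmod_triangle. rewrite Cmod_1. lra.
Qed.

(* the telescoping majorant *)
Definition tj (j : nat) : R := (1 / ((INR j + 1) * (INR j + 2)))%R.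

Lemma tj_pos j : (0 < tj j)%R.
Proof. unfold tj. pose proof (pos_INR j). apply Rdiv_lt_0_compat. lra. nra. Qed.

Lemma rsum_tj m n : rsum (fun j => tj (m + j)) n = (1 / (INR m + 1) - 1 / (INR (m + n) + 1))%R.
Proof.
  induction n; simpl.
  - rewrite Nat.add_0_r. ring.
  - rewrite IHn. unfold tj. rewrite Nat.add_succ_r, S_INR. pose proof (pos_INR (m + n)). pose proof (pos_INR m).
    field. repeat split; lra.
Qed.

Lemma rsum_tj_le m n : (rsum (fun j => tj (m + j)) n <= 1 / (INR m + 1))%R.
Proof.
  rewrite rsum_tj. pose proof (pos_INR (m+n)). assert (0 < 1 / (INR (m+n) + 1))%R by (apply Rdiv_lt_0_compat; lra). lra.
Qed.

Definition dom (w : nat -> C) (D : R) := forall j, (Cmod (w j) <= D * tj j)%R.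

Lemma dom_window w D m n : dom w D -> (rsum (fun j => Cmod (w (m + j)%nat)) n <= D / (INR m + 1))%R.
Proof.
  intros H. eapply Rle_trans. apply rsum_le with (g := fun j => (D * tj (m + j))%R). intros; apply H.
  assert (E : forall n, rsum (fun j => D * tj (m + j))%R n = (D * rsum (fun j => tj (m+j)) n)%R).
  { induction n0; simpl. ring. rewrite IHn0. ring. }
  rewrite E. assert (0 <= D)%R. { pose proof (H O). pose proof (Cmod_ge_0 (w O)). pose proof (tj_pos O). nra. }
  unfold Rdiv. rewrite <- (Rmult_1_l (/ (INR m + 1))). replace (1 * / (INR m + 1))%R with (1 / (INR m + 1))%R by (unfold Rdiv; ring).
  apply Rmult_le_compat_l; auto. apply rsum_tj_le.
Qed.

Lemma dom_total w D n : dom w D -> (rsum (fun j => Cmod (w j)) n <= D)%R.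
Proof.
  intros H. pose proof (dom_window w D 0 n H). simpl in H0.
  replace (D / (0 + 1))%R with D in H0 by field. exact H0.
Qed.

Lemma dom_nonneg w D : dom w D -> (0 <= D)%R.
Proof. intros H. pose proof (H O). pose proof (Cmod_ge_0 (w O)). pose proof (tj_pos O). nra. Qed.

Lemma small_tail D (eps : posreal) : (0 <= D)%R -> exists N, forall m, (N <= m)%nat -> (D / (INR m + 1) < eps)%R.
Proof.
  intros HD. destruct eps as [e ep]; simpl.
  assert (Hq : (0 <= D / e)%R) by (apply Rmult_le_pos; auto; left; apply Rinv_0_lt_compat; auto).
  destruct (archimed (D / e)) as [H1 _].
  assert (Hu : (0 <= up (D / e))%Z). { apply le_IZR. lra. }
  exists (Z.to_nat (up (D / e))). intros m Hm.
  apply le_INR in Hm. rewrite INR_IZR_INZ, Z2Nat.id in Hm by lia.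
  pose proof (pos_INR m).
  apply (Rmult_lt_reg_r (INR m + 1)). lra. unfold Rdiv. rewrite Rmult_assoc, Rinv_l, Rmult_1_r by lra.
  assert (D / e < INR m + 1)%R by lra.
  apply (Rmult_lt_compat_l e) in H0; auto. unfold Rdiv in H0.
  rewrite <- Rmult_assoc, (Rmult_comm e D), Rmult_assoc, Rinv_r, Rmult_1_r in H0 by lra. lra.
Qed.

Lemma prod_conv w D : dom w D -> exists P, Clim_seq (cprod (fun k => 1 + w k)) P.
Proof.
  intros H. apply Cauchy_C. intros eps. pose proof (dom_nonneg w D H) as HD.
  (* choose tail such that exp(D) * (exp(t) - 1) < eps; use exp t - 1 <= t exp t, t <= 1 *)
  set (e' := (eps / (exp D * exp 1 + 1))%R).
  assert (He' : (0 < e')%R). { unfold e'. apply Rdiv_lt_0_compat. apply cond_pos. pose proof (exp_pos D). pose proof (exp_pos 1). nra. }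
  destruct (small_tail D (mkposreal _ (Rmin_pos _ _ He' Rlt_0_1)) HD) as [N K].
  assert (Main : forall m n, (N <= m)%nat -> (Cmod (cprod (fun k => 1 + w k) (m + n) - cprod (fun k => 1 + w k) m)%C < eps)%R).
  { intros m n Hm. rewrite cprod_split.
    replace (cprod (fun k => 1 + w k) m * cprod (fun j => 1 + w (m + j)%nat) n - cprod (fun k => 1 + w k) m)
      with (cprod (fun k => 1 + w k) m * (cprod (fun j => 1 + w (m + j)%nat) n - 1)) by ring.
    rewrite Cmod_mult.
    pose proof (prod_bound w m) as B1. pose proof (dom_total w D m H) as B2.
    pose proof (prod_m1 (fun j => w (m + j)%nat) n) as B3. pose proof (dom_window w D m n H) as B4.
    specialize (K m Hm). simpl in K.
    set (t := rsum (fun k => Cmod (w (m + k)%nat)) n) in *.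
    assert (Ht0 : (0 <= t)%R). { apply rsum_nonneg. intros; apply Cmod_ge_0. }
    assert (Ht1 : (t <= 1)%R). { pose proof (Rmin_r e' 1). lra. }
    assert (Ht2 : (t <= e')%R). { pose proof (Rmin_l e' 1). lra. }
    assert (E1 : (exp (rsum (fun k => Cmod (w k)) m) <= exp D)%R).
    { destruct (Rle_lt_or_eq_dec _ _ B2). left; apply exp_increasing; auto. rewrite e; lra. }
    assert (E2 : (exp t - 1 <= t * exp 1)%R).
    { eapply Rle_trans. apply exp_m1_le; auto. apply Rmult_le_compat_l; auto.
      destruct (Rle_lt_or_eq_dec _ _ Ht1). left; apply exp_increasing; auto. rewrite e; lra. }
    pose proof (Cmod_ge_0 (cprod (fun k => 1 + w k) m)). pose proof (Cmod_ge_0 (cprod (fun j => 1 + w (m + j)%nat) n - 1)).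
    pose proof (exp_pos D). pose proof (exp_pos 1).
    apply Rle_lt_trans with (exp D * (e' * exp 1))%R.
    apply Rmult_le_compat; try lra. apply Rle_trans with (t * exp 1)%R; try lra. apply Rmult_le_compat_r; lra.
    unfold e'. destruct eps as [e ep]; simpl.
    apply Rlt_le_trans with (e / (exp D * exp 1 + 1) * (exp D * exp 1 + 1))%R.
    2: right; field; nra.
    rewrite <- Rmult_assoc, (Rmult_comm (exp D)), Rmult_assoc.
    apply Rmult_lt_compat_l. apply Rdiv_lt_0_compat; nra. nra. }
  exists N. intros m n Hm Hn.
  destruct (Compare_dec.le_lt_dec m n).
  - replace n with (m + (n - m))%nat by lia. rewrite Cmod_sub_sym. apply Main; auto.
  - replace m with (n + (m - n))%nat by lia. apply Main; auto.
Qed.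

Lemma sum_conv w D : dom w D -> exists S, Clim_seq (csum w) S.
Proof.
  intros H. apply Cauchy_C. intros eps. pose proof (dom_nonneg w D H) as HD.
  destruct (small_tail D eps HD) as [N K].
  assert (Main : forall m n, (N <= m)%nat -> (Cmod (csum w (m + n) - csum w m)%C < eps)%R).
  { intros m n Hm. rewrite csum_split. replace (csum w m + csum (fun j => w (m + j)%nat) n - csum w m) with (csum (fun j => w (m + j)%nat) n) by ring.
    eapply Rle_lt_trans. apply Cmod_csum. eapply Rle_lt_trans. apply dom_window; eauto. apply K; auto. }
  exists N. intros m n Hm Hn.
  destruct (Compare_dec.le_lt_dec m n).
  - replace n with (m + (n - m))%nat by lia. rewrite Cmod_sub_sym. apply Main; auto.
  - replace m with (n + (m - n))%nat by lia. apply Main; auto.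
Qed.

Open Scope C_scope.

Lemma Cmod_pos_of_ge (y : C) (a : R) : (0 < a)%R -> (a <= Cmod y)%R -> y <> 0.
Proof. intros H1 H2 E. rewrite E, Cmod_0 in H2. lra. Qed.

Lemma inv_le1 (k : R) : (1 <= k)%R -> (/ k <= 1)%R.
Proof. intros H. assert (0 < / k)%R by (apply Rinv_0_lt_compat; lra). assert (k * / k = 1)%R by (field; lra). nra. Qed.

Definition Kc (c H : R) : R := (4 * exp H + 1 / (c * c) + (1 + 4 * H * exp H) / c)%R.

Lemma core (y h : C) (l k c H : R) :
  (1 <= k)%R -> (0 < c)%R -> (0 <= l)%R -> (l <= 1 / k)%R ->
  (c * k <= Cmod y)%R -> (c * k <= Cmod (y + h))%R -> (Cmod h <= H)%R ->
  (Cmod (cexp (h * RtoC l) * (y / (y + h)) - 1 - h * (RtoC l - / y)) <= Kc c H * (Cmod h * Cmod h) / (k * k))%R.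
Proof.
  intros Hk Hc Hl0 Hl1 Hy Hyh HH.
  assert (Hck : (0 < c * k)%R) by nra.
  assert (Hy0 : y <> 0) by (eapply Cmod_pos_of_ge; eauto).
  assert (Hyh0 : y + h <> 0) by (eapply Cmod_pos_of_ge; eauto).
  set (u := h * RtoC l). set (r := cexp u - 1 - u).
  assert (Eid : cexp u * (y / (y + h)) - 1 - h * (RtoC l - / y)
               = r + h * h / (y * (y + h)) + (u + r) * (- h / (y + h))).
  { replace (cexp u) with (1 + u + r) by (unfold r; ring). unfold u. field. split; auto. }
  rewrite Eid.
  set (hm := Cmod h) in *. set (ym := Cmod y) in *. set (zm := Cmod (y + h)) in *.
  assert (Hhm : (0 <= hm)%R) by apply Cmod_ge_0.
  assert (Hu : Cmod u = (hm * l)%R). { unfold u. rewrite Cmod_mult, Cmod_R, Rabs_pos_eq; auto. }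
  assert (Hl1' : (l <= 1)%R). { apply Rle_trans with (1/k)%R; auto. unfold Rdiv. rewrite Rmult_1_l. apply inv_le1; lra. }
  assert (Hlk : (l * k <= 1)%R). { apply Rmult_le_reg_r with (/ k)%R. apply Rinv_0_lt_compat; lra. rewrite Rmult_assoc, Rinv_r, Rmult_1_r, Rmult_1_l by lra. unfold Rdiv in Hl1. lra. }
  assert (HuH : (Cmod u <= H)%R). { rewrite Hu. apply Rle_trans with (hm * 1)%R. apply Rmult_le_compat_l; auto. lra. }
  assert (HeH : (exp (Cmod u) <= exp H)%R). { destruct (Rle_lt_or_eq_dec _ _ HuH). left; apply exp_increasing; auto. rewrite e; lra. }
  assert (Hr : (Cmod r <= 4 * exp H * (hm * hm) / (k * k))%R).
  { eapply Rle_trans. apply cexp_bound. rewrite Hu.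
    assert (hm * l * (hm * l) * (k * k) <= hm * hm)%R.
    { replace (hm * l * (hm * l) * (k * k))%R with ((hm * hm) * ((l * k) * (l * k)))%R by ring.
      rewrite <- (Rmult_1_r (hm * hm)) at 2. apply Rmult_le_compat_l. nra. 
      assert (0 <= l * k)%R by nra. nra. }
    pose proof (exp_pos H). pose proof (exp_pos (hm * l)).
    apply Rmult_le_reg_r with (k * k)%R. nra. unfold Rdiv.
    replace (4 * exp H * (hm * hm) * / (k * k) * (k * k))%R with (4 * exp H * (hm*hm))%R by (field; nra).
    replace (4 * (hm * l) * (hm * l) * exp (hm * l) * (k * k))%R with (4 * exp (hm * l) * (hm * l * (hm * l) * (k * k)))%R by ring.
    rewrite Hu in HeH. assert (0 <= hm * l)%R by nra.
    apply Rmult_le_compat; try nra. }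
  assert (T2 : (Cmod (h * h / (y * (y + h))) <= 1 / (c * c) * (hm * hm) / (k * k))%R).
  { rewrite Cmod_div by (apply Cmult_neq_0; auto). rewrite !Cmod_mult. fold hm ym zm.
    assert (c * k * (c * k) <= ym * zm)%R by (apply Rmult_le_compat; lra).
    unfold Rdiv. rewrite Rmult_1_l. 
    replace (/ (c * c) * (hm * hm) * / (k * k))%R with (hm * hm * / (c * k * (c * k)))%R by (field; lra).
    apply Rmult_le_compat_l. nra. apply Rinv_le_contravar; nra. }
  assert (T3 : (Cmod ((u + r) * (- h / (y + h))) <= (1 + 4 * H * exp H) / c * (hm * hm) / (k * k))%R).
  { rewrite Cmod_mult, Cmod_div, Cmod_opp by auto. fold hm zm.
    assert (Hur : (Cmod (u + r) <= hm / k * (1 + 4 * H * exp H))%R).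
    { eapply Rle_trans. apply Cmod_triangle. rewrite Hu.
      assert (hm * l <= hm / k)%R. { unfold Rdiv. apply Rmult_le_compat_l; auto. unfold Rdiv in Hl1; lra. }
      assert (Hhk : (hm / k <= H)%R). { unfold Rdiv. apply Rle_trans with (hm * 1)%R. apply Rmult_le_compat_l; auto.
         apply inv_le1; lra. lra. }
      assert (4 * exp H * (hm * hm) / (k * k) <= hm / k * (4 * H * exp H))%R.
      { replace (4 * exp H * (hm * hm) / (k * k))%R with (hm / k * (4 * exp H * (hm / k)))%R by (field; lra).
        apply Rmult_le_compat_l. unfold Rdiv; apply Rmult_le_pos; auto; left; apply Rinv_0_lt_compat; lra.
        pose proof (exp_pos H). nra. }
      lra. }
    assert (Hq : (hm / zm <= hm / (c * k))%R). { unfold Rdiv. apply Rmult_le_compat_l; auto. apply Rinv_le_contravar; lra. }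
    apply Rle_trans with (hm / k * (1 + 4 * H * exp H) * (hm / (c * k)))%R.
    apply Rmult_le_compat; auto. apply Cmod_ge_0. unfold Rdiv; apply Rmult_le_pos; auto. left; apply Rinv_0_lt_compat; lra.
    right. field. lra. }
  eapply Rle_trans. apply Cmod_tri3. unfold Kc.
  replace ((4 * exp H + 1 / (c * c) + (1 + 4 * H * exp H) / c) * (hm * hm) / (k * k))%R with
    (4 * exp H * (hm * hm) / (k * k) + 1 / (c * c) * (hm * hm) / (k * k) + (1 + 4 * H * exp H) / c * (hm * hm) / (k * k))%R by (field; lra).
  lra.
Qed.

Open Scope C_scope.

Definition kR (j : nat) : R := INR (S j).
Definition ell (j : nat) : R := (ln (INR (S (S j))) - ln (INR (S j)))%R.

Lemma kR_ge1 j : (1 <= kR j)%R.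
Proof. unfold kR. rewrite S_INR. pose proof (pos_INR j). lra. Qed.

Lemma ln_le_m1 t : (0 < t)%R -> (ln t <= t - 1)%R.
Proof. intros H. pose proof (exp_ge_1p (ln t)). rewrite exp_ln in H0; lra. Qed.

Lemma ell_bounds j : (1 / (kR j + 1) <= ell j)%R /\ (ell j <= 1 / kR j)%R.
Proof.
  pose proof (kR_ge1 j) as Hk. unfold ell. replace (INR (S (S j))) with (kR j + 1)%R by (unfold kR; rewrite (S_INR (S j)); ring).
  fold (kR j). set (k := kR j) in *. split.
  - pose proof (ln_le_m1 (k / (k + 1))) as H. rewrite ln_div in H by lra.
    assert (k / (k+1) - 1 = - (1 / (k + 1)))%R by (field; lra). 
    assert (0 < k / (k + 1))%R by (apply Rdiv_lt_0_compat; lra). lra.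
  - pose proof (ln_le_m1 ((k + 1) / k)) as H. rewrite ln_div in H by lra.
    assert ((k+1) / k - 1 = 1 / k)%R by (field; lra).
    assert (0 < (k + 1) / k)%R by (apply Rdiv_lt_0_compat; lra). lra.
Qed.

Lemma ell_nonneg j : (0 <= ell j)%R.
Proof. pose proof (ell_bounds j) as [H _]. pose proof (kR_ge1 j). assert (0 < 1 / (kR j + 1))%R by (apply Rdiv_lt_0_compat; lra). lra. Qed.

Lemma ell_close j : (Cmod (RtoC (ell j) - / RtoC (kR j)) <= 1 / (kR j * kR j))%R.
Proof.
  pose proof (ell_bounds j) as [H1 H2]. pose proof (kR_ge1 j) as Hk.
  rewrite <- RtoC_inv by lra. rewrite <- RtoC_minus, Cmod_R.
  rewrite Rabs_left1. 2: { unfold Rdiv in H2. lra. }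
  assert (1 / kR j - 1 / (kR j + 1) <= 1 / (kR j * kR j))%R.
  { replace (1 / kR j - 1 / (kR j + 1))%R with (1 / (kR j * (kR j + 1)))%R by (field; lra).
    unfold Rdiv. rewrite !Rmult_1_l. apply Rinv_le_contravar; nra. }
  unfold Rdiv in *. lra.
Qed.

Lemma tj_kR j : (1 / (kR j * kR j) <= 2 * tj j)%R.
Proof.
  unfold tj, kR. rewrite S_INR. pose proof (pos_INR j).
  replace (2 * (1 / ((INR j + 1) * (INR j + 2))))%R with (1 / ((INR j + 1) * (INR j + 2) / 2))%R by (field; lra).
  unfold Rdiv. rewrite !Rmult_1_l. apply Rinv_le_contravar; nra.
Qed.

Lemma natC_S m : natC (S m) = natC m + 1.
Proof. unfold natC. rewrite S_INR, RtoC_plus. reflexivity. Qed.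

Lemma nonpole_add w m : ~ nonpos_int w -> w + natC m <> 0.
Proof. intros H E. apply H. exists m. replace w with (w + natC m - natC m) by ring. rewrite E. ring. Qed.

Lemma finmin (f : nat -> R) M : (forall m, (0 < f m)%R) -> exists c0, (0 < c0)%R /\ forall m, (m <= M)%nat -> (c0 <= f m)%R.
Proof.
  intros H. induction M.
  - exists (f O). split; auto. intros m Hm. replace m with O by lia. lra.
  - destruct IHM as [c0 [H0 H1]]. exists (Rmin c0 (f (S M))). split. apply Rmin_pos; auto.
    intros m Hm. destruct (Nat.eq_dec m (S M)). subst. apply Rmin_r.
    eapply Rle_trans. apply Rmin_l. apply H1. lia.
Qed.

Lemma Cmod_add_ge (a b : C) : (Cmod b - Cmod a <= Cmod (a + b))%R.
Proof. pose proof (Cmod_triangle (a + b) (- a)). rewrite Cmod_opp in H. replace (a + b + - a) with b in H by ring. lra. Qed.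

Lemma pole_sep w : ~ nonpos_int w -> exists c, (0 < c <= 1)%R /\ (c <= Cmod w)%R /\
  forall j, (c * kR j <= Cmod (w + RtoC (kR j)))%R.
Proof.
  intros Hw.
  set (M := Z.to_nat (up (2 * Cmod w))).
  assert (HM : (2 * Cmod w <= INR M)%R).
  { unfold M. destruct (archimed (2 * Cmod w)) as [H1 _]. pose proof (Cmod_ge_0 w).
    assert (0 <= up (2 * Cmod w))%Z by (apply le_IZR; lra).
    rewrite INR_IZR_INZ, Z2Nat.id by lia. lra. }
  destruct (finmin (fun m => Cmod (w + natC m)) M) as [c0 [Hc0 Hc0']].
  { intros m. pose proof (Cmod_ge_0 (w + natC m)). destruct (Req_dec (Cmod (w + natC m)) 0).
    apply Cmod_eq_0 in H0. exfalso; eapply nonpole_add; eauto. lra. }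
  pose proof (pos_INR M).
  set (c := Rmin (1/2) (c0 / (INR M + 1))).
  assert (Hcpos : (0 < c)%R). { apply Rmin_pos. lra. apply Rdiv_lt_0_compat; lra. }
  assert (Hc1 : (c <= c0 / (INR M + 1))%R) by apply Rmin_r.
  assert (Hc2 : (c <= 1/2)%R) by apply Rmin_l.
  assert (Hcc0 : (c0 / (INR M + 1) <= c0)%R).
  { unfold Rdiv. rewrite <- (Rmult_1_r c0) at 2. apply Rmult_le_compat_l. lra. apply inv_le1. lra. }
  exists c. split. lra. split.
  - specialize (Hc0' O ltac:(lia)). unfold natC in Hc0'. simpl in Hc0'. rewrite Cplus_0_r in Hc0'. lra.
  - intros j. destruct (Compare_dec.le_lt_dec (S j) M).
    + specialize (Hc0' (S j) l). unfold natC in Hc0'. fold (kR j) in Hc0'.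
      assert (kR j <= INR M + 1)%R. { unfold kR. apply le_INR in l. lra. }
      pose proof (kR_ge1 j).
      apply Rle_trans with (c0 / (INR M + 1) * kR j)%R. apply Rmult_le_compat_r; lra.
      apply Rle_trans with c0; auto.
      replace (c0 / (INR M + 1) * kR j)%R with (c0 * (kR j / (INR M + 1)))%R by (field; lra).
      rewrite <- (Rmult_1_r c0) at 2. apply Rmult_le_compat_l. lra.
      unfold Rdiv. apply Rmult_le_reg_r with (INR M + 1)%R. lra. rewrite Rmult_assoc, Rinv_l; lra.
    + assert (INR M <= kR j)%R. { unfold kR. apply le_INR. lia. }
      pose proof (Cmod_add_ge w (RtoC (kR j))). rewrite Cmod_R, Rabs_pos_eq in H1 by (pose proof (kR_ge1 j); lra).
      pose proof (kR_ge1 j). nra.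
Qed.

Open Scope C_scope.

Definition uf (w : C) (j : nat) : C := cexp (w * RtoC (ell j)) * (RtoC (kR j) / (w + RtoC (kR j))).

Lemma poch_S_l x m : poch x (S m) = x * poch (x + 1) m.
Proof.
  induction m.
  - simpl. unfold natC. simpl. ring.
  - change (poch x (S (S m))) with (poch x (S m) * (x + natC (S m))). rewrite IHm.
    simpl. rewrite natC_S. ring.
Qed.

Lemma poch_neq0 x n : (forall j, (j < n)%nat -> x + natC j <> 0) -> poch x n <> 0.
Proof.
  induction n; simpl; intros H.
  - intros E. apply (f_equal fst) in E. simpl in E. lra.
  - apply Cmult_neq_0. apply IHn; intros; apply H; lia. apply H; lia.
Qed.

Lemma kR_natC j : RtoC (kR j) = natC j + 1.
Proof. unfold kR. rewrite <- natC_S. reflexivity. Qed.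

Lemma cexp_ln_prod w n : cprod (fun j => cexp (w * RtoC (ell j))) n = cexp (w * RtoC (ln (INR (S n)))).
Proof.
  induction n.
  - simpl. rewrite ln_1. replace (w * RtoC 0) with (RtoC 0) by ring. rewrite cexp_0. ring.
  - simpl cprod. rewrite IHn, <- cexp_plus. f_equal. unfold ell.
    rewrite RtoC_minus. ring.
Qed.

Lemma kprod w n : ~ nonpos_int w ->
  cprod (fun j => RtoC (kR j) / (w + RtoC (kR j))) n * poch (w + 1) n = natC (fact n).
Proof.
  intros Hw. induction n.
  - simpl. unfold natC. simpl. ring.
  - simpl cprod. simpl poch.
    assert (Hk : w + 1 + natC n = w + RtoC (kR n)) by (rewrite kR_natC; ring).
    rewrite Hk.
    assert (Hnz : w + RtoC (kR n) <> 0). { rewrite kR_natC. replace (w + (natC n + 1)) with (w + natC (S n)) by (rewrite natC_S; ring). apply nonpole_add; auto. }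
    replace (cprod (fun j => RtoC (kR j) / (w + RtoC (kR j))) n * (RtoC (kR n) / (w + RtoC (kR n))) * (poch (w + 1) n * (w + RtoC (kR n))))
      with (cprod (fun j => RtoC (kR j) / (w + RtoC (kR j))) n * poch (w + 1) n * RtoC (kR n)) by (field; auto).
    rewrite IHn. unfold natC, kR. rewrite <- RtoC_mult. f_equal.
    change (fact (S n)) with (S n * fact n)%nat. rewrite mult_INR. ring.
Qed.

Lemma poch1_neq0 w n : ~ nonpos_int w -> poch (w + 1) n <> 0.
Proof.
  intros Hw. apply poch_neq0. intros j _. replace (w + 1 + natC j) with (w + natC (S j)) by (rewrite natC_S; ring).
  apply nonpole_add; auto.
Qed.

Lemma w_neq0 w : ~ nonpos_int w -> w <> 0.
Proof. intros Hw. pose proof (nonpole_add w O Hw). unfold natC in H. simpl in H. rewrite Cplus_0_r in H. auto. Qed.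

Lemma wk_neq0 w j : ~ nonpos_int w -> w + RtoC (kR j) <> 0.
Proof. intros Hw. rewrite kR_natC. replace (w + (natC j + 1)) with (w + natC (S j)) by (rewrite natC_S; ring). apply nonpole_add; auto. Qed.

Lemma gauss_formula w n : ~ nonpos_int w ->
  gauss_seq w (S n) = / w * cprod (uf w) n * (RtoC (kR n) / (w + RtoC (kR n))).
Proof.
  intros Hw. unfold gauss_seq. rewrite cpow_nat_cexp, <- cexp_ln_prod.
  rewrite (poch_S_l w (S n)). simpl (poch (w + 1) (S n)).
  assert (Hk : w + 1 + natC n = w + RtoC (kR n)) by (rewrite kR_natC; ring). rewrite Hk.
  unfold uf. rewrite cprod_mult.
  pose proof (kprod w n Hw) as K.
  pose proof (poch1_neq0 w n Hw) as P. pose proof (w_neq0 w Hw) as W. pose proof (wk_neq0 w n Hw) as WK.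
  assert (F : natC (fact (S n)) = natC (fact n) * RtoC (kR n)).
  { unfold natC, kR. rewrite <- RtoC_mult. f_equal. change (fact (S n)) with (S n * fact n)%nat. rewrite mult_INR. ring. }
  rewrite F, <- K. field. auto.
Qed.

Lemma dom_of_k2 (f : nat -> C) (A : R) : (forall j, (Cmod (f j) <= A / (kR j * kR j))%R) -> dom f (2 * A).
Proof.
  intros H j. eapply Rle_trans. apply H. pose proof (tj_kR j).
  assert (0 <= A)%R. { pose proof (H O). pose proof (Cmod_ge_0 (f O)). pose proof (kR_ge1 O).
    assert (0 < / (kR O * kR O))%R by (apply Rinv_0_lt_compat; nra). unfold Rdiv in H1. nra. }
  unfold Rdiv in *. rewrite Rmult_1_l in H0. replace (2 * A * tj j)%R with (A * (2 * tj j))%R by ring.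
  apply Rmult_le_compat_l; auto.
Qed.


Open Scope C_scope.

Definition ufi (w : C) (j : nat) : C := cexp (- w * RtoC (ell j)) * ((w + RtoC (kR j)) / RtoC (kR j)).

Lemma kR_neq0 j : RtoC (kR j) <> 0.
Proof. intros E. apply (f_equal fst) in E. simpl in E. pose proof (kR_ge1 j). lra. Qed.

Lemma cexp_opp_mul a : cexp a * cexp (- a) = 1.
Proof. rewrite <- cexp_plus. replace (a + - a) with (RtoC 0) by ring. apply cexp_0. Qed.

Lemma uf_ufi w j : ~ nonpos_int w -> uf w j * ufi w j = 1.
Proof.
  intros Hw. unfold uf, ufi. pose proof (cexp_opp_mul (w * RtoC (ell j))) as E.
  replace (- w * RtoC (ell j)) with (- (w * RtoC (ell j))) by ring.
  pose proof (kR_neq0 j). pose proof (wk_neq0 w j Hw).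
  transitivity (cexp (w * RtoC (ell j)) * cexp (- (w * RtoC (ell j))) * ((RtoC (kR j) / (w + RtoC (kR j))) * ((w + RtoC (kR j)) / RtoC (kR j)))).
  ring. rewrite E. field. auto.
Qed.

Lemma uf_neq0 w j : ~ nonpos_int w -> uf w j <> 0.
Proof. intros Hw E. pose proof (uf_ufi w j Hw). rewrite E in H. apply (f_equal fst) in H. simpl in H. lra. Qed.

Lemma ufi_eq w j : ~ nonpos_int w -> / uf w j = ufi w j.
Proof. intros Hw. pose proof (uf_ufi w j Hw). pose proof (uf_neq0 w j Hw).
  replace (ufi w j) with (/ uf w j * (uf w j * ufi w j)) by (field; auto). rewrite H. ring. Qed.

Lemma Cmod_RtoC_pos (k : R) : (0 <= k)%R -> Cmod (RtoC k) = k.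
Proof. intros. rewrite Cmod_R. apply Rabs_pos_eq; auto. Qed.

Section Bounds.
Variable w : C.
Variable c : R.
Hypothesis Hc : (0 < c <= 1)%R.
Hypothesis Hsep : forall j, (c * kR j <= Cmod (w + RtoC (kR j)))%R.

Lemma uf_bound j : (Cmod (uf w j - 1) <= (Cmod w + Kc c (Cmod w) * (Cmod w * Cmod w)) / (kR j * kR j))%R.
Proof.
  pose proof (kR_ge1 j) as Hk. pose proof (ell_bounds j) as [_ Hl]. pose proof (ell_nonneg j). pose proof Hc as [Hc0 Hc1].
  pose proof (core (RtoC (kR j)) w (ell j) (kR j) c (Cmod w) Hk (proj1 Hc) H Hl) as K.
  rewrite Cmod_RtoC_pos in K by lra. rewrite Cplus_comm in K.
  specialize (K ltac:(nra) (Hsep j) (Rle_refl _)).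
  replace (uf w j - 1) with ((cexp (w * RtoC (ell j)) * (RtoC (kR j) / (w + RtoC (kR j))) - 1 - w * (RtoC (ell j) - / RtoC (kR j))) + w * (RtoC (ell j) - / RtoC (kR j))) by (unfold uf; ring).
  eapply Rle_trans. apply Cmod_triangle. rewrite Cmod_mult.
  pose proof (ell_close j). pose proof (Cmod_ge_0 w).
  assert (Cmod w * Cmod (RtoC (ell j) - / RtoC (kR j)) <= Cmod w * (1 / (kR j * kR j)))%R by (apply Rmult_le_compat_l; auto).
  replace ((Cmod w + Kc c (Cmod w) * (Cmod w * Cmod w)) / (kR j * kR j))%R with
    (Kc c (Cmod w) * (Cmod w * Cmod w) / (kR j * kR j) + Cmod w * (1 / (kR j * kR j)))%R by (field; lra).
  lra.
Qed.

Lemma ufi_bound j : (Cmod (ufi w j - 1) <= (Cmod w + Cmod w * Cmod w / c + Kc c (Cmod w) * (Cmod w * Cmod w)) / (kR j * kR j))%R.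
Proof.
  pose proof (kR_ge1 j) as Hk. pose proof (ell_bounds j) as [_ Hl]. pose proof (ell_nonneg j). pose proof Hc as [Hc0 Hc1].
  pose proof (core (w + RtoC (kR j)) (- w) (ell j) (kR j) c (Cmod w) Hk (proj1 Hc) H Hl (Hsep j)) as K.
  replace (w + RtoC (kR j) + - w) with (RtoC (kR j)) in K by ring.
  rewrite Cmod_RtoC_pos in K by lra. rewrite Cmod_opp in K.
  specialize (K ltac:(nra) (Rle_refl _)).
  pose proof (wk_neq0' := Hsep j).
  assert (Hwk : w + RtoC (kR j) <> 0) by (eapply Cmod_pos_of_ge; [|exact (Hsep j)]; nra).
  replace (ufi w j - 1) with ((cexp (- w * RtoC (ell j)) * ((w + RtoC (kR j)) / RtoC (kR j)) - 1 - - w * (RtoC (ell j) - / (w + RtoC (kR j)))) + - w * (RtoC (ell j) - / (w + RtoC (kR j)))) by (unfold ufi; ring).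
  eapply Rle_trans. apply Cmod_triangle. rewrite Cmod_mult, Cmod_opp.
  assert (EQ : RtoC (ell j) - / (w + RtoC (kR j)) = (RtoC (ell j) - / RtoC (kR j)) + w / (RtoC (kR j) * (w + RtoC (kR j)))) by (field; split; auto; apply kR_neq0).
  pose proof (ell_close j). pose proof (Cmod_ge_0 w).
  assert (B2 : (Cmod (w / (RtoC (kR j) * (w + RtoC (kR j)))) <= Cmod w / c / (kR j * kR j))%R).
  { rewrite Cmod_div, Cmod_mult, Cmod_RtoC_pos by (try lra; apply Cmult_neq_0; auto; apply kR_neq0).
    pose proof (Hsep j). unfold Rdiv. rewrite (Rmult_assoc (Cmod w)). apply Rmult_le_compat_l; auto.
    replace (/ c * / (kR j * kR j))%R with (/ (kR j * (c * kR j)))%R by (field; lra).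
    apply Rinv_le_contravar. apply Rmult_lt_0_compat; [lra | apply Rmult_lt_0_compat; lra]. apply Rmult_le_compat_l; lra. }
  assert (B3 : (Cmod (RtoC (ell j) - / RtoC (kR j) + w / (RtoC (kR j) * (w + RtoC (kR j)))) <= 1 / (kR j * kR j) + Cmod w / c / (kR j * kR j))%R).
  { eapply Rle_trans. apply Cmod_triangle. lra. }
  assert (Cmod w * Cmod (RtoC (ell j) - / (w + RtoC (kR j))) <= Cmod w * (1 / (kR j * kR j) + Cmod w / c / (kR j * kR j)))%R by (rewrite EQ; apply Rmult_le_compat_l; auto).
  replace ((Cmod w + Cmod w * Cmod w / c + Kc c (Cmod w) * (Cmod w * Cmod w)) / (kR j * kR j))%R with
    (Kc c (Cmod w) * (Cmod w * Cmod w) / (kR j * kR j) + Cmod w * (1 / (kR j * kR j) + Cmod w / c / (kR j * kR j)))%R by (field; lra).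
  lra.
Qed.

End Bounds.

Open Scope C_scope.

Lemma k_ratio_lim w c : (0 < c <= 1)%R -> (forall j, (c * kR j <= Cmod (w + RtoC (kR j)))%R) ->
  Clim_seq (fun n => RtoC (kR n) / (w + RtoC (kR n))) 1.
Proof.
  intros [Hc0 Hc1] Hsep eps.
  destruct (small_tail (Cmod w / c) eps) as [N K]. apply Rdiv_le_0_compat. apply Cmod_ge_0. lra.
  exists N. intros n Hn. specialize (K n Hn).
  pose proof (Hsep n). pose proof (kR_ge1 n).
  assert (Hwk : w + RtoC (kR n) <> 0) by (eapply Cmod_pos_of_ge; [|exact H]; nra).
  replace (RtoC (kR n) / (w + RtoC (kR n)) - 1) with (- w / (w + RtoC (kR n))) by (field; auto).
  rewrite Cmod_div, Cmod_opp by auto.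
  eapply Rle_lt_trans. 2: exact K.
  replace (INR n + 1)%R with (kR n) by (unfold kR; rewrite S_INR; ring).
  unfold Rdiv. rewrite Rmult_assoc. apply Rmult_le_compat_l. apply Cmod_ge_0.
  rewrite <- Rinv_mult. apply Rinv_le_contravar. nra. lra.
Qed.

Lemma cprod_1 n : cprod (fun _ => 1) n = 1.
Proof. induction n; simpl; auto. rewrite IHn. ring. Qed.

Lemma Gamma_Q w : ~ nonpos_int w -> exists Q, Clim_seq (cprod (uf w)) Q /\ Q <> 0 /\ Gamma w = Q / w.
Proof.
  intros Hw. destruct (pole_sep w Hw) as [c [Hc [Hcw Hsep]]].
  set (A1 := (Cmod w + Kc c (Cmod w) * (Cmod w * Cmod w))%R).
  set (A2 := (Cmod w + Cmod w * Cmod w / c + Kc c (Cmod w) * (Cmod w * Cmod w))%R).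
  destruct (prod_conv (fun j => uf w j - 1) (2 * A1)) as [Q HQ].
  { apply dom_of_k2. intros j. apply uf_bound; auto. }
  destruct (prod_conv (fun j => ufi w j - 1) (2 * A2)) as [Qi HQi].
  { apply dom_of_k2. intros j. apply ufi_bound; auto. }
  assert (HQ' : Clim_seq (cprod (uf w)) Q).
  { eapply Clim_ext. 2: exact HQ. intros n. apply cprod_ext. intros; ring. }
  assert (HQi' : Clim_seq (cprod (ufi w)) Qi).
  { eapply Clim_ext. 2: exact HQi. intros n. apply cprod_ext. intros; ring. }
  assert (HQQ : Q * Qi = 1).
  { pose proof (Clim_mult _ _ _ _ HQ' HQi') as M.
    apply (Clim_unique (fun n => cprod (uf w) n * cprod (ufi w) n)); auto.
    eapply Clim_ext. 2: apply Clim_const. intros n. rewrite <- cprod_mult.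
    rewrite <- (cprod_1 n). apply cprod_ext. intros. rewrite uf_ufi; auto. }
  exists Q. split; auto. split.
  { intros E. rewrite E in HQQ. apply (f_equal fst) in HQQ. simpl in HQQ. lra. }
  unfold Gamma. apply lim_seq_C. apply Clim_shift.
  eapply Clim_ext. intros n. symmetry. apply gauss_formula; auto.
  replace (Q / w) with (/ w * Q * 1) by (field; apply w_neq0; auto).
  apply Clim_mult. apply Clim_scal. auto. eapply k_ratio_lim; eauto.
Qed.

Open Scope C_scope.

Definition cterm (z : C) (j : nat) : C := RtoC (ell j) - / (z + RtoC (kR j)).

Section Deriv.
Variable z : C.
Variable c : R.
Hypothesis Hc : (0 < c <= 1)%R.
Hypothesis Hcz : (c <= Cmod z)%R.
Hypothesis Hsep : forall j, (c * kR j <= Cmod (z + RtoC (kR j)))%R.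

Lemma cterm_bound j : (Cmod (cterm z j) <= (1 + Cmod z / c) / (kR j * kR j))%R.
Proof.
  pose proof (kR_ge1 j) as Hk. pose proof Hc as [Hc0 Hc1].
  assert (Hwk : z + RtoC (kR j) <> 0) by (eapply Cmod_pos_of_ge; [|exact (Hsep j)]; nra).
  unfold cterm.
  replace (RtoC (ell j) - / (z + RtoC (kR j))) with ((RtoC (ell j) - / RtoC (kR j)) + z / (RtoC (kR j) * (z + RtoC (kR j)))) by (field; split; auto; apply kR_neq0).
  eapply Rle_trans. apply Cmod_triangle.
  pose proof (ell_close j). pose proof (Cmod_ge_0 z).
  assert (B2 : (Cmod (z / (RtoC (kR j) * (z + RtoC (kR j)))) <= Cmod z / c / (kR j * kR j))%R).
  { rewrite Cmod_div, Cmod_mult, Cmod_RtoC_pos by (try lra; apply Cmult_neq_0; auto; apply kR_neq0).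
    pose proof (Hsep j). unfold Rdiv. rewrite (Rmult_assoc (Cmod z)). apply Rmult_le_compat_l; auto.
    replace (/ c * / (kR j * kR j))%R with (/ (kR j * (c * kR j)))%R by (field; lra).
    apply Rinv_le_contravar. apply Rmult_lt_0_compat; [lra | apply Rmult_lt_0_compat; lra]. apply Rmult_le_compat_l; lra. }
  replace ((1 + Cmod z / c) / (kR j * kR j))%R with (1 / (kR j * kR j) + Cmod z / c / (kR j * kR j))%R by (field; lra).
  lra.
Qed.

Lemma V_eq h j : ~ nonpos_int (z + h) -> ~ nonpos_int z ->
  uf (z + h) j * ufi z j = cexp (h * RtoC (ell j)) * ((z + RtoC (kR j)) / (z + RtoC (kR j) + h)).
Proof.
  intros Hzh Hz. unfold uf, ufi.
  pose proof (wk_neq0 _ j Hzh). pose proof (wk_neq0 _ j Hz). pose proof (kR_neq0 j).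
  replace (cexp ((z + h) * RtoC (ell j))) with (cexp (h * RtoC (ell j)) * cexp (z * RtoC (ell j))) by (rewrite <- cexp_plus; f_equal; ring).
  replace (- z * RtoC (ell j)) with (- (z * RtoC (ell j))) by ring.
  transitivity (cexp (h * RtoC (ell j)) * (cexp (z * RtoC (ell j)) * cexp (- (z * RtoC (ell j)))) * (RtoC (kR j) / (z + h + RtoC (kR j)) * ((z + RtoC (kR j)) / RtoC (kR j)))).
  ring. rewrite cexp_opp_mul.
  replace (z + RtoC (kR j) + h) with (z + h + RtoC (kR j)) by ring. field. auto.
Qed.

Lemma V_bound h j : (Cmod h <= c / 2)%R -> ~ nonpos_int (z + h) -> ~ nonpos_int z ->
  (Cmod (uf (z + h) j * ufi z j - 1 - h * cterm z j) <= Kc (c / 2) 1 * (Cmod h * Cmod h) / (kR j * kR j))%R.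
Proof.
  intros Hh Hzh Hz. rewrite V_eq by auto.
  pose proof (kR_ge1 j) as Hk. pose proof (ell_bounds j) as [_ Hl]. pose proof (ell_nonneg j). pose proof Hc as [Hc0 Hc1].
  apply core; auto. lra.
  - pose proof (Hsep j). nra.
  - pose proof (Hsep j). pose proof (Cmod_add_ge h (z + RtoC (kR j))). replace (h + (z + RtoC (kR j))) with (z + RtoC (kR j) + h) in H1 by ring. nra.
  - lra.
Qed.

End Deriv.

Open Scope C_scope.

Lemma near_nonpole z c h : (0 < c <= 1)%R -> (c <= Cmod z)%R ->
  (forall j, (c * kR j <= Cmod (z + RtoC (kR j)))%R) -> (Cmod h < c / 2)%R -> ~ nonpos_int (z + h).
Proof.
  intros [Hc0 Hc1] Hcz Hsep Hh [m E].
  assert (E2 : z + natC m = - h) by (replace z with (z + h - h) by ring; rewrite E; ring).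
  destruct m.
  - unfold natC in E2. simpl in E2. rewrite Cplus_0_r in E2. rewrite E2, Cmod_opp in Hcz. lra.
  - rewrite natC_S, <- kR_natC in E2. pose proof (Hsep m). rewrite E2, Cmod_opp in H. pose proof (kR_ge1 m). nra.
Qed.

Lemma cprod_ufi_inv z n : ~ nonpos_int z -> cprod (ufi z) n = / cprod (uf z) n.
Proof.
  intros Hz. assert (P : cprod (uf z) n * cprod (ufi z) n = 1).
  { rewrite <- cprod_mult. rewrite <- (cprod_1 n). apply cprod_ext. intros; apply uf_ufi; auto. }
  assert (cprod (uf z) n <> 0). { intros E. rewrite E in P. apply (f_equal fst) in P. simpl in P. lra. }
  replace (cprod (ufi z) n) with (/ cprod (uf z) n * (cprod (uf z) n * cprod (ufi z) n)) by (field; auto).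
  rewrite P. ring.
Qed.

Definition KK (z : C) (c : R) : R :=
  let A := (1 + Cmod z / c)%R in let K := Kc (c / 2) 1 in let B := (2 * (A + K))%R in
  (2 * K + B * B * exp B)%R.

Lemma ratio_est z c Qz Cz h Qh : ~ nonpos_int z -> (0 < c <= 1)%R -> (c <= Cmod z)%R ->
  (forall j, (c * kR j <= Cmod (z + RtoC (kR j)))%R) ->
  Clim_seq (cprod (uf z)) Qz -> Qz <> 0 -> Clim_seq (csum (cterm z)) Cz ->
  (Cmod h < c / 2)%R -> Clim_seq (cprod (uf (z + h))) Qh ->
  (Cmod (Qh / Qz - 1 - h * Cz) <= KK z c * (Cmod h * Cmod h))%R.
Proof.
  intros Hz Hc Hcz Hsep HQz HQz0 HCz Hh HQh.
  pose proof Hc as [Hc0 Hc1].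
  assert (Hzh : ~ nonpos_int (z + h)) by (eapply near_nonpole; eauto).
  set (A := (1 + Cmod z / c)%R). set (K := Kc (c / 2) 1). set (B := (2 * (A + K))%R).
  assert (HA : (0 <= A)%R). { unfold A. pose proof (Cmod_ge_0 z). assert (0 <= Cmod z / c)%R by (apply Rdiv_le_0_compat; lra). lra. }
  assert (HK : (0 <= K)%R). { unfold K, Kc. pose proof (exp_pos 1).
    assert (0 <= 1 / (c / 2 * (c / 2)))%R by (apply Rdiv_le_0_compat; nra).
    assert (0 <= (1 + 4 * 1 * exp 1) / (c / 2))%R by (apply Rdiv_le_0_compat; nra). lra. }
  set (hm := Cmod h). assert (Hhm : (0 <= hm)%R) by apply Cmod_ge_0. assert (Hhm1 : (hm <= 1)%R) by (unfold hm; lra).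
  set (V := fun j => uf (z + h) j * ufi z j - 1).
  assert (Va : forall j, (Cmod (V j - h * cterm z j)%C <= K * (hm * hm) / (kR j * kR j))%R).
  { intros j. unfold V. apply V_bound; auto. lra. }
  assert (Vb : forall j, (Cmod (V j) <= hm * (A + K) / (kR j * kR j))%R).
  { intros j. pose proof (Va j). pose proof (cterm_bound z c Hc Hsep j). pose proof (kR_ge1 j).
    replace (V j) with ((V j - h * cterm z j) + h * cterm z j) by ring.
    eapply Rle_trans. apply Cmod_triangle. rewrite Cmod_mult. fold hm.
    assert (hm * Cmod (cterm z j) <= hm * (A / (kR j * kR j)))%R by (apply Rmult_le_compat_l; auto).
    assert (K * (hm * hm) / (kR j * kR j) <= K * hm / (kR j * kR j))%R.
    { unfold Rdiv. apply Rmult_le_compat_r. left; apply Rinv_0_lt_compat; nra. apply Rmult_le_compat_l; auto. nra. }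
    replace (hm * (A + K) / (kR j * kR j))%R with (hm * (A / (kR j * kR j)) + K * hm / (kR j * kR j))%R by (field; nra).
    lra. }
  assert (Hs : forall n, (rsum (fun j => Cmod (V j)) n <= hm * B)%R).
  { intros n. replace (hm * B)%R with (2 * (hm * (A + K)))%R by (unfold B; ring). apply dom_total. apply dom_of_k2. exact Vb. }
  assert (Hd : forall n, (Cmod (csum (fun j => V j - h * cterm z j) n)%C <= 2 * (K * (hm * hm)))%R).
  { intros n. eapply Rle_trans. apply Cmod_csum. apply dom_total. apply dom_of_k2. exact Va. }
  assert (HB : (0 <= B)%R) by (unfold B; lra).
  assert (Main : forall n, (Cmod (cprod (fun j => 1 + V j) n - 1 - h * csum (cterm z) n)%C <= KK z c * (hm * hm))%R).
  { intros n. pose proof (prod_F3 V n) as P3. set (s := rsum (fun k => Cmod (V k)) n) in *.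
    assert (Hs0 : (0 <= s)%R) by (apply rsum_nonneg; intros; apply Cmod_ge_0).
    pose proof (Hs n). fold s in H.
    pose proof (exp_m2_le s Hs0).
    assert (Es : (exp s <= exp B)%R). { assert (s <= B)%R by nra. destruct (Rle_lt_or_eq_dec _ _ H1). left; apply exp_increasing; auto. rewrite e; lra. }
    assert (s * s * exp s <= (hm * B) * (hm * B) * exp B)%R.
    { pose proof (exp_pos s). apply Rmult_le_compat; try nra. }
    replace (cprod (fun j => 1 + V j) n - 1 - h * csum (cterm z) n) with
      ((cprod (fun j => 1 + V j) n - 1 - csum V n) + csum (fun j => V j - h * cterm z j) n)
      by (rewrite csum_minus, csum_scal; ring).
    eapply Rle_trans. apply Cmod_triangle. pose proof (Hd n).
    unfold KK. fold A K B.
    assert ((hm * B) * (hm * B) * exp B + 2 * (K * (hm * hm)) = (2 * K + B * B * exp B) * (hm * hm))%R by ring.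
    lra. }
  assert (Lim : Clim_seq (fun n => cprod (fun j => 1 + V j) n - 1 - h * csum (cterm z) n) (Qh / Qz - 1 - h * Cz)).
  { apply Clim_minus. apply Clim_minus. 2: apply Clim_const. 2: apply Clim_scal; auto.
    eapply Clim_ext. intros n. symmetry.
    transitivity (cprod (uf (z + h)) n * cprod (ufi z) n).
    rewrite <- cprod_mult. apply cprod_ext. intros. unfold V. ring.
    rewrite cprod_ufi_inv by auto. reflexivity.
    apply Clim_div; auto. }
  replace (Qh / Qz - 1 - h * Cz) with (Qh / Qz - 1 - h * Cz - 0) by ring.
  apply (Clim_le _ _ _ _ Lim). exists O. intros n _. replace (cprod (fun j => 1 + V j) n - 1 - h * csum (cterm z) n - 0) with (cprod (fun j => 1 + V j) n - 1 - h * csum (cterm z) n) by ring. apply Main.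
Qed.

Open Scope C_scope.

Lemma KK_nonneg z c : (0 < c)%R -> (0 <= KK z c)%R.
Proof.
  intros Hc0. unfold KK. cbv zeta.
  set (A := (1 + Cmod z / c)%R). set (K := Kc (c / 2) 1).
  assert (0 <= A)%R. { unfold A. pose proof (Cmod_ge_0 z). assert (0 <= Cmod z / c)%R by (apply Rdiv_le_0_compat; lra). lra. }
  assert (0 <= K)%R. { unfold K, Kc. pose proof (exp_pos 1).
    assert (0 <= 1 / (c / 2 * (c / 2)))%R by (apply Rdiv_le_0_compat; nra).
    assert (0 <= (1 + 4 * 1 * exp 1) / (c / 2))%R by (apply Rdiv_le_0_compat; nra). lra. }
  pose proof (exp_pos (2 * (A + K))).
  assert (0 <= (2 * (A + K)) * (2 * (A + K)) * exp (2 * (A + K)))%R by (apply Rmult_le_pos; [nra|lra]).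
  lra.
Qed.

Theorem digamma_formula z : ~ nonpos_int z ->
  exists Cz, Clim_seq (csum (cterm z)) Cz /\ digamma z = Cz - / z.
Proof.
  intros Hz. destruct (pole_sep z Hz) as [c [Hc [Hcz Hsep]]]. pose proof Hc as [Hc0 Hc1].
  destruct (sum_conv (cterm z) (2 * (1 + Cmod z / c))) as [Cz HCz].
  { apply dom_of_k2. apply cterm_bound; auto. }
  destruct (Gamma_Q z Hz) as [Qz [HQz [HQz0 HGz]]].
  exists Cz. split; auto.
  assert (Hz0 : z <> 0) by (apply w_neq0; auto).
  set (T := Qz / z * (Cz - / z)).
  assert (HG' : Gamma' z = T).
  { unfold Gamma'. apply lim_loc'. intros eps.
    set (M := (Cmod Qz * Cmod (z * Cz - 1) / (c * c * (c / 2)) + Cmod Qz * KK z c / (c / 2))%R).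
    assert (HM : (0 <= M)%R).
    { unfold M. assert (0 <= KK z c)%R by (apply KK_nonneg; lra).
      pose proof (Cmod_ge_0 Qz). pose proof (Cmod_ge_0 (z * Cz - 1)).
      assert (0 < c * c * (c / 2))%R by (repeat apply Rmult_lt_0_compat; lra).
      assert (0 <= Cmod Qz * Cmod (z * Cz - 1) / (c * c * (c / 2)))%R by (apply Rdiv_le_0_compat; nra).
      assert (0 <= Cmod Qz * KK z c / (c / 2))%R by (apply Rdiv_le_0_compat; nra). lra. }
    assert (Hd : (0 < Rmin (c / 2) (eps / (M + 1)))%R).
    { apply Rmin_pos. lra. apply Rdiv_lt_0_compat. apply cond_pos. lra. }
    exists (mkposreal _ Hd). intros h Hh0 Hh. simpl in Hh.
    assert (Hh1 : (Cmod h < c / 2)%R) by (eapply Rlt_le_trans; [exact Hh | apply Rmin_l]).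
    assert (Hh2 : (Cmod h < eps / (M + 1))%R) by (eapply Rlt_le_trans; [exact Hh | apply Rmin_r]).
    assert (Hzh : ~ nonpos_int (z + h)) by (eapply near_nonpole; eauto).
    destruct (Gamma_Q (z + h) Hzh) as [Qh [HQh [_ HGh]]].
    pose proof (ratio_est z c Qz Cz h Qh Hz Hc Hcz Hsep HQz HQz0 HCz Hh1 HQh) as R.
    set (rho := Qh / Qz - 1 - h * Cz) in R.
    assert (Hzh0 : z + h <> 0) by (apply w_neq0; auto).
    assert (Eq : (Gamma (z + h) - Gamma z) / h - T =
                 Qz * (- h) * (z * Cz - 1) / (z * z * (z + h)) + Qz * rho / (h * (z + h))).
    { rewrite HGh, HGz. unfold T.
      replace Qh with (Qz * (1 + h * Cz + rho)) by (unfold rho; field; auto).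
      field. repeat split; auto. }
    replace (RtoC 0 + h) with (z + h - z) by ring.
    rewrite Eq. clear Eq.
    assert (Hzhm : (c / 2 <= Cmod (z + h))%R).
    { pose proof (Cmod_add_ge h z). replace (h + z) with (z + h) in H by ring. lra. }
    assert (Hhp : (0 < Cmod h)%R). { pose proof (Cmod_ge_0 h). destruct (Req_dec (Cmod h) 0). apply Cmod_eq_0 in H0. contradiction. lra. }
    eapply Rle_lt_trans. apply Cmod_triangle.
    assert (T1 : (Cmod (Qz * - h * (z * Cz - 1) / (z * z * (z + h))) <= Cmod h * (Cmod Qz * Cmod (z * Cz - 1) / (c * c * (c / 2))))%R).
    { rewrite Cmod_div by (repeat apply Cmult_neq_0; auto). rewrite !Cmod_mult, Cmod_opp.
      pose proof (Cmod_ge_0 Qz). pose proof (Cmod_ge_0 (z * Cz - 1)).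
      replace (Cmod Qz * Cmod h * Cmod (z * Cz - 1) / (Cmod z * Cmod z * Cmod (z + h)))%R with
        (Cmod h * (Cmod Qz * Cmod (z * Cz - 1)) * / (Cmod z * Cmod z * Cmod (z + h)))%R by (field; repeat split; nra).
      unfold Rdiv. rewrite Rmult_assoc. apply Rmult_le_compat_l. lra. apply Rmult_le_compat_l. nra.
      apply Rinv_le_contravar. repeat apply Rmult_lt_0_compat; lra.
      apply Rmult_le_compat; try nra. }
    assert (T2 : (Cmod (Qz * rho / (h * (z + h))) <= Cmod h * (Cmod Qz * KK z c / (c / 2)))%R).
    { rewrite Cmod_div by (apply Cmult_neq_0; auto). rewrite !Cmod_mult.
      pose proof (Cmod_ge_0 Qz).
      apply Rle_trans with (Cmod Qz * (KK z c * (Cmod h * Cmod h)) / (Cmod h * (c / 2)))%R.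
      { unfold Rdiv. apply Rmult_le_compat. apply Rmult_le_pos; auto; apply Cmod_ge_0.
        left; apply Rinv_0_lt_compat; nra. apply Rmult_le_compat_l; auto.
        apply Rinv_le_contravar. nra. apply Rmult_le_compat_l; lra. }
      right. field. lra. }
    assert (Cmod h * M < eps)%R.
    { apply Rle_lt_trans with (eps / (M + 1) * M)%R. apply Rmult_le_compat_r; lra.
      destruct eps as [e ep]; simpl in *. 
      replace (e / (M + 1) * M)%R with (e - e / (M + 1))%R by (field; lra).
      assert (0 < e / (M + 1))%R by (apply Rdiv_lt_0_compat; lra). lra. }
    unfold M in H. lra. }
  unfold digamma. rewrite HG', HGz. unfold T. field. split; auto.
Qed.

Open Scope C_scope.

Section WZ.
Variables a b : C.

Definition fourN (n : nat) : C := poch (1 + a + b) n * poch (1 + a - b) n * poch (1 - a + b) n * poch (1 - a - b) n.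
Definition denD (x : C) (n : nat) : C := poch (x + a) n * poch (x - a) n * poch (x + b) n * poch (x - b) n.
Definition sgn (n : nat) : C := Cpow (RtoC (-1)) n.
Definition base (n : nat) (x : C) : C :=
  sgn n * (natC (fact n) * natC (fact n)) * fourN n / (natC (fact (2 * n)) * denD x (S n)).
Definition PP (n : nat) (x : C) : C :=
  5 * natC n * natC n + 2 * (2 + 3 * x) * natC n + (1 + x) * (1 + x) + x * x - a * a - b * b.
Definition FF (n : nat) (x : C) : C := 2 * (2 * x + natC n) * base n x.
Definition GG (n : nat) (x : C) : C := PP n x * base n x / (2 * natC n + 1).

Definition good (x : C) := forall m, x + a + natC m <> 0 /\ x - a + natC m <> 0 /\ x + b + natC m <> 0 /\ x - b + natC m <> 0.

Lemma good_shift x : good x -> good (x + 1).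
Proof. intros H m. destruct (H (S m)) as [H1 [H2 [H3 H4]]]. rewrite natC_S in *.
  repeat split; intros E; [apply H1|apply H2|apply H3|apply H4]; rewrite <- E; ring. Qed.

Lemma natC_pos_neq0 n : natC n + 1 <> 0.
Proof. intros E. apply (f_equal fst) in E. unfold natC in E. simpl in E. pose proof (pos_INR n). lra. Qed.

Lemma natC_fact_neq0 n : natC (fact n) <> 0.
Proof. intros E. apply (f_equal fst) in E. unfold natC in E. simpl in E. pose proof (lt_0_INR _ (lt_O_fact n)). lra. Qed.

Lemma two_n1_neq0 n : 2 * natC n + 1 <> 0.
Proof. intros E. apply (f_equal fst) in E. unfold natC in E. simpl in E. pose proof (pos_INR n). lra. Qed.

Lemma denD_neq0 x n : good x -> denD x n <> 0.
Proof.
  intros H. unfold denD. repeat apply Cmult_neq_0; apply poch_neq0; intros j _; apply H.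
Qed.

Lemma natC_plus m n : natC (m + n) = natC m + natC n.
Proof. unfold natC. rewrite plus_INR, RtoC_plus. reflexivity. Qed.
Lemma natC_mult m n : natC (m * n) = natC m * natC n.
Proof. unfold natC. rewrite mult_INR, RtoC_mult. reflexivity. Qed.

Lemma fact_S m : natC (fact (S m)) = (natC m + 1) * natC (fact m).
Proof. change (fact (S m)) with (S m * fact m)%nat. rewrite natC_mult, natC_S. reflexivity. Qed.

Lemma natC_double n : natC (2 * n) = 2 * natC n.
Proof. unfold natC. rewrite mult_INR. simpl (INR 2). rewrite RtoC_mult. f_equal. Qed.

Lemma fact2S n : natC (fact (2 * S n)) = natC (fact (2 * n)) * (2 * natC n + 1) * (2 * natC n + 2).
Proof.
  replace (2 * S n)%nat with (S (S (2 * n))) by lia.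
  rewrite !fact_S, natC_S, natC_double. ring.
Qed.

Lemma base_S n x : good x ->
  base (S n) x = base n x * (- ((natC n + 1) * (natC n + 1)) *
     ((natC n + 1 + a + b) * (natC n + 1 + a - b) * (natC n + 1 - a + b) * (natC n + 1 - a - b)))
     / ((2 * natC n + 1) * (2 * natC n + 2) *
        ((x + a + natC (S n)) * (x - a + natC (S n)) * (x + b + natC (S n)) * (x - b + natC (S n)))).
Proof.
  intros H. unfold base.
  rewrite fact2S.
  rewrite fact_S.
  unfold sgn. simpl Cpow.
  unfold fourN. simpl poch.
  unfold denD. change (poch (x + a) (S (S n))) with (poch (x + a) (S n) * (x + a + natC (S n))).
  change (poch (x - a) (S (S n))) with (poch (x - a) (S n) * (x - a + natC (S n))).
  change (poch (x + b) (S (S n))) with (poch (x + b) (S n) * (x + b + natC (S n))).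
  change (poch (x - b) (S (S n))) with (poch (x - b) (S n) * (x - b + natC (S n))).
  pose proof (denD_neq0 x (S n) H) as HD. unfold denD in HD.
  destruct (H (S n)) as [H1 [H2 [H3 H4]]].
  pose proof (natC_fact_neq0 n). pose proof (natC_fact_neq0 (2 * n)). pose proof (two_n1_neq0 n).
  assert (2 * natC n + 2 <> 0). { replace (2 * natC n + 2) with (2 * (natC n + 1)) by ring. apply Cmult_neq_0. intros E; apply (f_equal fst) in E; simpl in E; lra. apply natC_pos_neq0. }
  field. repeat split; auto.
  all: apply poch_neq0; intros j _; apply H.
Qed.

Lemma poch_shift y m : poch (y + 1) m * y = poch y m * (y + natC m).
Proof.
  rewrite Cmult_comm, <- poch_S_l. simpl. reflexivity.
Qed.

Lemma base_shift n x : good x ->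
  base n (x + 1) = base n x * ((x + a) * (x - a) * (x + b) * (x - b)) /
     ((x + a + natC (S n)) * (x - a + natC (S n)) * (x + b + natC (S n)) * (x - b + natC (S n))).
Proof.
  intros H. unfold base, denD.
  replace (x + 1 + a) with (x + a + 1) by ring. replace (x + 1 - a) with (x - a + 1) by ring.
  replace (x + 1 + b) with (x + b + 1) by ring. replace (x + 1 - b) with (x - b + 1) by ring.
  destruct (H (S n)) as [H1 [H2 [H3 H4]]]. destruct (H O) as [G1 [G2 [G3 G4]]].
  unfold natC in G1, G2, G3, G4. simpl in G1, G2, G3, G4. rewrite Cplus_0_r in G1, G2, G3, G4.
  pose proof (poch_shift (x + a) (S n)). pose proof (poch_shift (x - a) (S n)).
  pose proof (poch_shift (x + b) (S n)). pose proof (poch_shift (x - b) (S n)).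
  assert (Ha : poch (x + a + 1) (S n) = poch (x + a) (S n) * (x + a + natC (S n)) / (x + a)) by (rewrite <- H0; field; auto).
  assert (Hb : poch (x - a + 1) (S n) = poch (x - a) (S n) * (x - a + natC (S n)) / (x - a)) by (rewrite <- H5; field; auto).
  assert (Hc : poch (x + b + 1) (S n) = poch (x + b) (S n) * (x + b + natC (S n)) / (x + b)) by (rewrite <- H6; field; auto).
  assert (Hd : poch (x - b + 1) (S n) = poch (x - b) (S n) * (x - b + natC (S n)) / (x - b)) by (rewrite <- H7; field; auto).
  rewrite Ha, Hb, Hc, Hd.
  pose proof (natC_fact_neq0 (2 * n)).
  field. repeat split; auto.
  all: apply poch_neq0; intros j _; apply H.
Qed.

Lemma FG_tele n x : good x -> FF n x - FF (S n) x = GG n x - GG n (x + 1).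
Proof.
  intros H. unfold FF, GG. rewrite base_S, base_shift by auto.
  destruct (H (S n)) as [H1 [H2 [H3 H4]]]. 
  pose proof (two_n1_neq0 n).
  assert (2 * natC n + 2 <> 0). { replace (2 * natC n + 2) with (2 * (natC n + 1)) by ring. apply Cmult_neq_0. intros E; apply (f_equal fst) in E; simpl in E; lra. apply natC_pos_neq0. }
  unfold PP. rewrite natC_S in *. 
  field. repeat split; auto.
Qed.

End WZ.

Open Scope C_scope.

Lemma Re_le_Cmod (w : C) : (Re w <= Cmod w)%R.
Proof. pose proof (re_le_Cmod w). pose proof (Rle_abs (Re w)). lra. Qed.

Lemma Re_natC n : Re (natC n) = INR n.
Proof. unfold natC, Re. simpl. reflexivity. Qed.

Lemma Re_RtoC r : Re (RtoC r) = r.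
Proof. reflexivity. Qed.

Lemma Re_ge_negmod (w : C) : (- Cmod w <= Re w)%R.
Proof. pose proof (re_le_Cmod w). pose proof (Rabs_le_between' (Re w) 0 (Cmod w)). 
  pose proof (Rle_abs (- Re w)). rewrite Rabs_Ropp in H1. lra. Qed.

Lemma Cmod_2 : Cmod 2 = 2%R.
Proof. rewrite Cmod_R. apply Rabs_pos_eq. lra. Qed.

Lemma Cmod_natC n : Cmod (natC n) = INR n.
Proof. unfold natC. rewrite Cmod_R. apply Rabs_pos_eq. apply pos_INR. Qed.

Lemma prod4_le (p1 p2 p3 p4 P : R) : (0 <= p1 <= P)%R -> (0 <= p2 <= P)%R -> (0 <= p3 <= P)%R -> (0 <= p4 <= P)%R ->
  (p1 * p2 * p3 * p4 <= P * P * P * P)%R.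
Proof. intros. repeat apply Rmult_le_compat; try apply Rmult_le_pos; try apply Rmult_le_pos; lra. Qed.

Lemma poch_lower y m : (forall j, (1 <= Cmod (y + natC j))%R) -> (Cmod y <= Cmod (poch y (S m)))%R.
Proof.
  intros H. induction m.
  - simpl. unfold natC. simpl. rewrite Cplus_0_r, Cmult_1_l. lra.
  - change (poch y (S (S m))) with (poch y (S m) * (y + natC (S m))). rewrite Cmod_mult.
    pose proof (H (S m)). pose proof (Cmod_ge_0 (poch y (S m))). nra.
Qed.

Section Est.
Variables al a b : C.
Hypothesis Hg : good a b al.

Definition xk (k : nat) : C := al + natC k.
Definition rho : R := (Cmod al + Cmod a + Cmod b)%R.

Lemma rho_nonneg : (0 <= rho)%R.
Proof. unfold rho. pose proof (Cmod_ge_0 al). pose proof (Cmod_ge_0 a). pose proof (Cmod_ge_0 b). lra. Qed.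

Lemma good_xk k : good a b (xk k).
Proof. induction k. unfold xk, natC. simpl. rewrite Cplus_0_r. auto.
  unfold xk in *. rewrite natC_S. replace (al + (natC k + 1)) with (al + natC k + 1) by ring. apply good_shift. auto. Qed.

Lemma re_lower k (c : C) j : (Cmod c <= Cmod a + Cmod b)%R ->
  (INR k + INR j - rho <= Re (xk k + c + natC j))%R.
Proof.
  intros Hc. unfold xk. rewrite !re_plus, !Re_natC. pose proof (Re_ge_negmod al). pose proof (Re_ge_negmod c).
  unfold rho. lra.
Qed.

Lemma mod_lower k (c : C) j : (Cmod c <= Cmod a + Cmod b)%R ->
  (INR k + INR j - rho <= Cmod (xk k + c + natC j))%R.
Proof. intros Hc. eapply Rle_trans. apply (re_lower k c j Hc). apply Re_le_Cmod. Qed.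

Lemma cmod_a : (Cmod a <= Cmod a + Cmod b)%R. Proof. pose proof (Cmod_ge_0 b). lra. Qed.
Lemma cmod_b : (Cmod b <= Cmod a + Cmod b)%R. Proof. pose proof (Cmod_ge_0 a). lra. Qed.
Lemma cmod_ma : (Cmod (- a) <= Cmod a + Cmod b)%R. Proof. rewrite Cmod_opp. apply cmod_a. Qed.
Lemma cmod_mb : (Cmod (- b) <= Cmod a + Cmod b)%R. Proof. rewrite Cmod_opp. apply cmod_b. Qed.

Definition numN (n : nat) : C := sgn n * (natC (fact n) * natC (fact n)) * fourN a b n / natC (fact (2 * n)).

Lemma base_num n x : good a b x -> base a b n x = numN n / denD a b x (S n).
Proof. intros H. unfold base, numN. pose proof (natC_fact_neq0 (2 * n)). pose proof (denD_neq0 a b x (S n) H). field. auto. Qed.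

Lemma denD_lower N k : (2 * rho + 2 <= INR k)%R ->
  (INR k / 2 * (INR k / 2) * (INR k / 2) * (INR k / 2) <= Cmod (denD a b (xk k) (S N)))%R.
Proof.
  intros Hk. pose proof rho_nonneg.
  assert (G : forall c, (Cmod c <= Cmod a + Cmod b)%R -> (INR k / 2 <= Cmod (poch (xk k + c) (S N)))%R).
  { intros c Hc. eapply Rle_trans. 2: apply poch_lower.
    - pose proof (mod_lower k c O Hc). simpl in H0. unfold natC in H0. simpl in H0. rewrite Cplus_0_r in H0. lra.
    - intros j. pose proof (mod_lower k c j Hc). pose proof (pos_INR j). lra. }
  unfold denD. rewrite !Cmod_mult.
  replace (xk k - a) with (xk k + - a) by ring. replace (xk k - b) with (xk k + - b) by ring.
  pose proof (G a cmod_a). pose proof (G (- a) cmod_ma). pose proof (G b cmod_b). pose proof (G (- b) cmod_mb).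
  assert (0 <= INR k / 2)%R by lra.
  repeat apply Rmult_le_compat; try apply Rmult_le_pos; try apply Rmult_le_pos; lra.
Qed.

Lemma base_upper N k : (2 * rho + 2 <= INR k)%R ->
  (Cmod (base a b N (xk k)) <= 16 * Cmod (numN N) / (INR k * INR k * INR k * INR k))%R.
Proof.
  intros Hk. rewrite base_num by apply good_xk. pose proof (denD_lower N k Hk). pose proof rho_nonneg.
  assert (Hpos : (0 < INR k / 2 * (INR k / 2) * (INR k / 2) * (INR k / 2))%R) by (repeat apply Rmult_lt_0_compat; lra).
  rewrite Cmod_div by (apply denD_neq0, good_xk).
  replace (16 * Cmod (numN N) / (INR k * INR k * INR k * INR k))%R with (Cmod (numN N) / (INR k / 2 * (INR k / 2) * (INR k / 2) * (INR k / 2)))%R by (field; lra).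
  unfold Rdiv. apply Rmult_le_compat_l. apply Cmod_ge_0. apply Rinv_le_contravar; lra.
Qed.

End Est.

Open Scope C_scope.

Lemma natC_p1 N : natC N + 1 = RtoC (INR N + 1).
Proof. unfold natC. rewrite RtoC_plus. reflexivity. Qed.

Lemma Cmod_2n1 N : Cmod (2 * natC N + 1) = (2 * INR N + 1)%R.
Proof. unfold natC. rewrite <- RtoC_mult, <- RtoC_plus, Cmod_R. apply Rabs_pos_eq. pose proof (pos_INR N). lra. Qed.
Lemma Cmod_2n2 N : Cmod (2 * natC N + 2) = (2 * INR N + 2)%R.
Proof. unfold natC. rewrite <- RtoC_mult, <- RtoC_plus, Cmod_R. apply Rabs_pos_eq. pose proof (pos_INR N). lra. Qed.

Lemma Cmod_shift_le (m : R) (u : C) : (0 <= m)%R -> (Cmod (RtoC m + u) <= m + Cmod u)%R.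
Proof. intros. eapply Rle_trans. apply Cmod_triangle. rewrite Cmod_R, Rabs_pos_eq; lra. Qed.

Lemma pow4_le (p q : R) : (0 <= p)%R -> (p <= q)%R -> (p * p * p * p <= q * q * q * q)%R.
Proof. intros. apply prod4_le; lra. Qed.

Section Est2.
Variables al a b : C.
Hypothesis Hg : good a b al.

Lemma ratio_bound N k :
  (20 * (Cmod a + Cmod b) + 21 * rho al a b + 2 * Cmod al + 5 <= INR N)%R ->
  (Cmod (FF a b (S N) (xk al k)) <= Cmod (FF a b N (xk al k)) / 2)%R.
Proof.
  intros HN. set (x := xk al k). set (A := (Cmod a + Cmod b)%R) in *. set (r := rho al a b) in *.
  set (m := (INR N + 1)%R).
  pose proof (rho_nonneg al a b) as Hr. fold r in Hr.
  assert (HA : (0 <= A)%R) by (unfold A; pose proof (Cmod_ge_0 a); pose proof (Cmod_ge_0 b); lra).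
  assert (Hal : (0 <= Cmod al)%R) by apply Cmod_ge_0.
  assert (Hm2 : (2 <= m)%R) by (unfold m; lra).
  assert (Hmr : (m + A <= (21/20) * (m - r))%R) by (unfold m; lra).
  assert (Hmr0 : (0 < m - r)%R) by (unfold m; lra).
  assert (Hx : good a b x) by apply good_xk, Hg.
  unfold FF. rewrite base_S by auto. set (beta := base a b N x).
  set (NUM := - ((natC N + 1) * (natC N + 1)) * ((natC N + 1 + a + b) * (natC N + 1 + a - b) * (natC N + 1 - a + b) * (natC N + 1 - a - b))).
  set (DEN := (2 * natC N + 1) * (2 * natC N + 2) * ((x + a + natC (S N)) * (x - a + natC (S N)) * (x + b + natC (S N)) * (x - b + natC (S N)))).
  assert (HNUM : (Cmod NUM <= m * m * ((m + A) * (m + A) * (m + A) * (m + A)))%R).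
  { unfold NUM. rewrite Cmod_mult, Cmod_opp, !Cmod_mult. rewrite !natC_p1. fold m.
    rewrite Cmod_R, Rabs_pos_eq by lra.
    apply Rmult_le_compat_l. nra.
    replace (RtoC m + a - b) with (RtoC m + (a - b)) by ring. replace (RtoC m - a + b) with (RtoC m + (- a + b)) by ring.
    replace (RtoC m - a - b) with (RtoC m + (- a - b)) by ring. replace (RtoC m + a + b) with (RtoC m + (a + b)) by ring.
    assert (B1 : (Cmod (a + b) <= A)%R) by apply Cmod_triangle.
    assert (B2 : (Cmod (a - b) <= A)%R) by apply Cmod_minus_tri.
    assert (B3 : (Cmod (- a + b) <= A)%R) by (eapply Rle_trans; [apply Cmod_triangle|]; rewrite Cmod_opp; unfold A; lra).
    assert (B4 : (Cmod (- a - b) <= A)%R) by (eapply Rle_trans; [apply Cmod_minus_tri|]; rewrite Cmod_opp; unfold A; lra).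
    pose proof (Cmod_shift_le m (a + b)). pose proof (Cmod_shift_le m (a - b)).
    pose proof (Cmod_shift_le m (- a + b)). pose proof (Cmod_shift_le m (- a - b)).
    apply prod4_le; split; try apply Cmod_ge_0; try lra. }
  assert (HDEN : ((2 * m - 1) * (2 * m) * ((m - r) * (m - r) * (m - r) * (m - r)) <= Cmod DEN)%R).
  { unfold DEN. rewrite !Cmod_mult, Cmod_2n1, Cmod_2n2.
    replace (2 * INR N + 1)%R with (2 * m - 1)%R by (unfold m; ring). replace (2 * INR N + 2)%R with (2 * m)%R by (unfold m; ring).
    apply Rmult_le_compat_l. nra.
    replace (x - a) with (x + - a) by ring. replace (x - b) with (x + - b) by ring.
    assert (G : forall c, (Cmod c <= A)%R -> (m - r <= Cmod (x + c + natC (S N)))%R).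
    { intros c Hc. unfold x. pose proof (mod_lower al a b k c (S N) Hc). rewrite S_INR in H. fold r in H. pose proof (pos_INR k). unfold m. lra. }
    pose proof (G a (cmod_a a b)). pose proof (G (- a) (cmod_ma a b)). pose proof (G b (cmod_b a b)). pose proof (G (- b) (cmod_mb a b)).
    repeat apply Rmult_le_compat; try apply Rmult_le_pos; try apply Rmult_le_pos; lra. }
  assert (HR : (Cmod NUM / Cmod DEN <= (41/100))%R).
  { assert (Hd0 : (0 < (2 * m - 1) * (2 * m) * ((m - r) * (m - r) * (m - r) * (m - r)))%R) by (repeat apply Rmult_lt_0_compat; lra).
    apply Rle_trans with (m * m * ((m + A) * (m + A) * (m + A) * (m + A)) / ((2 * m - 1) * (2 * m) * ((m - r) * (m - r) * (m - r) * (m - r))))%R.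
    { unfold Rdiv. apply Rmult_le_compat; try apply Cmod_ge_0. left; apply Rinv_0_lt_compat; lra. auto. apply Rinv_le_contravar; auto. }
    pose proof (pow4_le (m + A) ((21/20) * (m - r)) ltac:(lra) Hmr) as P4.
    assert (E1 : (m * m / ((2 * m - 1) * (2 * m)) <= 1 / 3)%R).
    { apply Rmult_le_reg_r with ((2 * m - 1) * (2 * m))%R. nra. unfold Rdiv. rewrite Rmult_assoc, Rinv_l by nra. nra. }
    set (q := ((m - r) * (m - r) * (m - r) * (m - r))%R) in *.
    assert (Hq : (0 < q)%R) by (unfold q; repeat apply Rmult_lt_0_compat; lra).
    replace ((21/20) * (m - r) * ((21/20) * (m - r)) * ((21/20) * (m - r)) * ((21/20) * (m - r)))%R with ((194481/160000) * q)%R in P4 by (unfold q; field).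
    replace (m * m * ((m + A) * (m + A) * (m + A) * (m + A)) / ((2 * m - 1) * (2 * m) * q))%R
      with ((m * m / ((2 * m - 1) * (2 * m))) * (((m + A) * (m + A) * (m + A) * (m + A)) / q))%R by (field; split; lra).
    assert (E2 : ((m + A) * (m + A) * (m + A) * (m + A) / q <= (194481/160000))%R).
    { apply Rmult_le_reg_r with q. auto. unfold Rdiv. rewrite Rmult_assoc, Rinv_l by lra. lra. }
    assert (0 <= m * m / ((2 * m - 1) * (2 * m)))%R by (apply Rdiv_le_0_compat; nra).
    assert (0 <= (m + A) * (m + A) * (m + A) * (m + A) / q)%R by (apply Rdiv_le_0_compat; [|lra]; apply Rmult_le_pos; [apply Rmult_le_pos; [apply Rmult_le_pos|]|]; lra).
    apply Rle_trans with (1/3 * (194481/160000))%R. apply Rmult_le_compat; lra. lra. }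
  assert (Ht : (5 <= Cmod (2 * x + natC N))%R).
  { eapply Rle_trans. 2: apply Re_le_Cmod. unfold x, xk. rewrite !re_plus, Re_natC.
    replace (Re (2 * (al + natC k))) with (2 * (Re al + INR k))%R by (unfold Re, natC; simpl; ring).
    pose proof (Re_ge_negmod al). pose proof (pos_INR k). lra. }
  assert (Ht1 : (Cmod (2 * x + natC (S N)) <= Cmod (2 * x + natC N) + 1)%R).
  { rewrite natC_S. replace (2 * x + (natC N + 1)) with ((2 * x + natC N) + 1) by ring.
    eapply Rle_trans. apply Cmod_triangle. rewrite Cmod_1. lra. }
  assert (HDEN0 : DEN <> 0).
  { intros E. rewrite E, Cmod_0 in HDEN. assert (0 < (2 * m - 1) * (2 * m) * ((m - r) * (m - r) * (m - r) * (m - r)))%R by (repeat apply Rmult_lt_0_compat; lra). lra. }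
  replace (2 * (2 * x + natC (S N)) * (beta * NUM / DEN)) with (2 * beta * (2 * x + natC (S N)) * (NUM / DEN)) by (field; auto).
  replace (2 * (2 * x + natC N) * beta) with (2 * beta * (2 * x + natC N)) by ring.
  assert (HDpos : (0 < Cmod DEN)%R).
  { assert (0 < (2 * m - 1) * (2 * m) * ((m - r) * (m - r) * (m - r) * (m - r)))%R by (repeat apply Rmult_lt_0_compat; lra). lra. }
  rewrite (Cmod_mult (2 * beta * (2 * x + natC (S N))) (NUM / DEN)), Cmod_div by auto.
  rewrite (Cmod_mult (2 * beta) (2 * x + natC (S N))), (Cmod_mult (2 * beta) (2 * x + natC N)).
  pose proof (Cmod_ge_0 (2 * beta)).
  set (t := Cmod (2 * x + natC N)) in *.
  assert (0 <= Cmod NUM / Cmod DEN)%R by (apply Rdiv_le_0_compat; [apply Cmod_ge_0|lra]).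
  assert (Cmod (2 * x + natC (S N)) * (Cmod NUM / Cmod DEN) <= (t + 1) * (41/100))%R by (apply Rmult_le_compat; try lra; apply Cmod_ge_0).
  assert ((t + 1) * (41/100) <= t / 2)%R by lra.
  rewrite Rmult_assoc.
  apply Rle_trans with (Cmod (2 * beta) * (t / 2))%R. apply Rmult_le_compat_l; lra.
  right. field.
Qed.

End Est2.

Open Scope C_scope.

Lemma exists_nat_ge (r : R) : exists n : nat, (r <= INR n)%R.
Proof.
  destruct (archimed r) as [H1 _]. destruct (Z_lt_le_dec (up r) 0).
  - exists O. simpl. apply IZR_lt in l. lra.
  - exists (Z.to_nat (up r)). rewrite INR_IZR_INZ, Z2Nat.id by lia. lra.
Qed.

Lemma rsum_mono f m n : (forall k, (0 <= f k)%R) -> (m <= n)%nat -> (rsum f m <= rsum f n)%R.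
Proof.
  intros H Hmn. replace n with (m + (n - m))%nat by lia. rewrite rsum_split.
  pose proof (rsum_nonneg (fun j => f (m + j)%nat) (n - m) ltac:(intros; apply H)). lra.
Qed.

Lemma Cmod_natC' n : Cmod (natC n) = INR n.
Proof. unfold natC. rewrite Cmod_R. apply Rabs_pos_eq. apply pos_INR. Qed.

Section Est3.
Variables al a b : C.
Hypothesis Hg : good a b al.

Lemma x_upper k : (Cmod (xk al k) <= Cmod al + INR k)%R.
Proof. unfold xk. eapply Rle_trans. apply Cmod_triangle. rewrite Cmod_natC'. lra. Qed.

Lemma FF_sum_bound N : exists B, forall K, (rsum (fun k => Cmod (FF a b N (xk al k))) K <= B)%R.
Proof.
  pose proof (rho_nonneg al a b) as Hr.
  destruct (exists_nat_ge (2 * rho al a b + 2 + 2 * Cmod al + INR N + 2)) as [k1 Hk1].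
  pose proof (Cmod_ge_0 al). pose proof (pos_INR N).
  set (S1 := rsum (fun k => Cmod (FF a b N (xk al k))) k1).
  set (C1 := (288 * Cmod (numN a b N))%R).
  assert (Big : forall k, (k1 <= k)%nat -> (Cmod (FF a b N (xk al k)) <= C1 * tj k)%R).
  { intros k Hk. apply le_INR in Hk.
    assert (Hk2 : (2 * rho al a b + 2 <= INR k)%R) by lra.
    pose proof (base_upper al a b Hg N k Hk2) as HB.
    unfold FF. rewrite !Cmod_mult, Cmod_2.
    assert (H2x : (Cmod (2 * xk al k + natC N) <= 3 * INR k)%R).
    { eapply Rle_trans. apply Cmod_triangle. rewrite Cmod_mult, Cmod_2, Cmod_natC'. pose proof (x_upper k). lra. }
    set (kk := INR k) in *. assert (Hkk : (2 <= kk)%R) by lra.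
    set (nN := Cmod (numN a b N)) in *. assert (HnN : (0 <= nN)%R) by apply Cmod_ge_0.
    apply Rle_trans with (2 * (3 * kk) * (16 * nN / (kk * kk * kk * kk)))%R.
    { pose proof (Cmod_ge_0 (2 * xk al k + natC N)). pose proof (Cmod_ge_0 (base a b N (xk al k))). apply Rmult_le_compat; try lra. }
    unfold C1, tj. fold nN. replace (INR k) with kk by reflexivity.
    replace (2 * (3 * kk) * (16 * nN / (kk * kk * kk * kk)))%R with (96 * nN / (kk * kk * kk))%R by (field; lra).
    replace (288 * nN * (1 / ((kk + 1) * (kk + 2))))%R with (96 * nN / ((kk + 1) * (kk + 2) / 3))%R by (field; lra).
    unfold Rdiv. apply Rmult_le_compat_l. lra. apply Rinv_le_contravar. nra. nra. }
  exists (S1 + C1)%R. intros K.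
  assert (HC1 : (0 <= C1)%R) by (unfold C1; pose proof (Cmod_ge_0 (numN a b N)); lra).
  assert (HS1 : (0 <= S1)%R) by (apply rsum_nonneg; intros; apply Cmod_ge_0).
  destruct (Compare_dec.le_lt_dec K k1).
  - eapply Rle_trans. apply rsum_mono. intros; apply Cmod_ge_0. exact l. unfold S1. lra.
  - replace K with (k1 + (K - k1))%nat by lia. rewrite rsum_split. fold S1.
    assert (rsum (fun j => Cmod (FF a b N (xk al (k1 + j)))) (K - k1) <= C1)%R.
    { eapply Rle_trans. apply rsum_le with (g := fun j => (C1 * tj (k1 + j))%R). intros; apply Big; lia.
      assert (E : forall n, rsum (fun j => C1 * tj (k1 + j))%R n = (C1 * rsum (fun j => tj (k1+j)) n)%R).
      { induction n; simpl. ring. rewrite IHn. ring. }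
      rewrite E. pose proof (rsum_tj_le k1 (K - k1)). pose proof (pos_INR k1).
      assert (1 / (INR k1 + 1) <= 1)%R. { unfold Rdiv. rewrite Rmult_1_l. apply inv_le1. lra. }
      assert (rsum (fun j => tj (k1 + j)) (K - k1) <= 1)%R by lra.
      rewrite <- (Rmult_1_r C1) at 2. apply Rmult_le_compat_l; auto. }
    lra.
Qed.

Lemma PP_bound n x (K : R) : (1 <= K)%R -> (Cmod x <= 2 * K)%R ->
  (Cmod (PP a b n x) <= (5 * INR n * INR n + 16 * INR n + 13 + Cmod a * Cmod a + Cmod b * Cmod b) * (K * K))%R.
Proof.
  intros HK Hx. unfold PP. set (X := Cmod x) in *. set (nn := INR n).
  pose proof (Cmod_ge_0 x). fold X in H. pose proof (pos_INR n). fold nn in H0.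
  pose proof (Cmod_ge_0 a). pose proof (Cmod_ge_0 b).
  assert (T1 : (Cmod (5 * natC n * natC n) <= 5 * nn * nn)%R).
  { rewrite !Cmod_mult, Cmod_natC', Cmod_R, Rabs_pos_eq by lra. fold nn. lra. }
  assert (T2 : (Cmod (2 * (2 + 3 * x) * natC n) <= 2 * (2 + 3 * X) * nn)%R).
  { rewrite !Cmod_mult, Cmod_natC', Cmod_2. fold nn. apply Rmult_le_compat_r. lra. apply Rmult_le_compat_l. lra.
    eapply Rle_trans. apply Cmod_triangle. rewrite Cmod_2, Cmod_mult, Cmod_R, Rabs_pos_eq by lra. fold X. lra. }
  assert (T3 : (Cmod ((1 + x) * (1 + x)) <= (1 + X) * (1 + X))%R).
  { rewrite Cmod_mult. assert (Cmod (1 + x) <= 1 + X)%R by (eapply Rle_trans; [apply Cmod_triangle|]; rewrite Cmod_1; fold X; lra).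
    pose proof (Cmod_ge_0 (1 + x)). nra. }
  assert (T4 : (Cmod (x * x) <= X * X)%R) by (rewrite Cmod_mult; fold X; lra).
  assert (T5 : (Cmod (a * a) <= Cmod a * Cmod a)%R) by (rewrite Cmod_mult; lra).
  assert (T6 : (Cmod (b * b) <= Cmod b * Cmod b)%R) by (rewrite Cmod_mult; lra).
  eapply Rle_trans. apply Cmod_minus_tri. eapply Rle_trans. apply Rplus_le_compat_r. apply Cmod_minus_tri.
  eapply Rle_trans. apply Rplus_le_compat_r. apply Rplus_le_compat_r. apply Cmod_triangle.
  eapply Rle_trans. apply Rplus_le_compat_r. apply Rplus_le_compat_r. apply Rplus_le_compat_r. apply Cmod_triangle.
  eapply Rle_trans. apply Rplus_le_compat_r. apply Rplus_le_compat_r. apply Rplus_le_compat_r. apply Rplus_le_compat_r. apply Cmod_triangle.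
  assert (X * X <= 4 * (K * K))%R by nra.
  assert ((1 + X) * (1 + X) <= 9 * (K * K))%R by nra.
  assert (HKK : (1 <= K * K)%R) by nra.
  assert (HKK2 : (K <= K * K)%R) by nra.
  assert (X * nn <= 2 * K * nn)%R by (apply Rmult_le_compat_r; lra).
  assert (K * nn <= K * K * nn)%R by (apply Rmult_le_compat_r; lra).
  assert (nn <= K * K * nn)%R by (rewrite <- (Rmult_1_l nn) at 1; apply Rmult_le_compat_r; lra).
  assert (2 * (2 + 3 * X) * nn <= (4 * nn + 12 * nn) * (K * K))%R by nra.
  assert (5 * nn * nn <= 5 * nn * nn * (K * K))%R by nra.
  assert (Cmod a * Cmod a <= Cmod a * Cmod a * (K * K))%R by nra.
  assert (Cmod b * Cmod b <= Cmod b * Cmod b * (K * K))%R by nra.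
  nra.
Qed.

Lemma GG_lim0 n : Clim_seq (fun K => GG a b n (xk al K)) 0.
Proof.
  pose proof (rho_nonneg al a b) as Hr. pose proof (Cmod_ge_0 al).
  destruct (exists_nat_ge (2 * rho al a b + 2 + Cmod al)) as [k1 Hk1].
  set (Cn := (5 * INR n * INR n + 16 * INR n + 13 + Cmod a * Cmod a + Cmod b * Cmod b)%R).
  assert (HCn : (0 <= Cn)%R). { unfold Cn. pose proof (pos_INR n). pose proof (Cmod_ge_0 a). pose proof (Cmod_ge_0 b). nra. }
  set (D := (32 * Cn * Cmod (numN a b n))%R).
  assert (HD : (0 <= D)%R) by (unfold D; pose proof (Cmod_ge_0 (numN a b n)); nra).
  assert (Big : forall K, (k1 <= K)%nat -> (Cmod (GG a b n (xk al K)) <= D / (INR K + 1))%R).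
  { intros K HK. apply le_INR in HK. set (kk := INR K) in *.
    assert (Hk2 : (2 * rho al a b + 2 <= kk)%R) by lra.
    pose proof (base_upper al a b Hg n K Hk2) as HB. fold kk in HB.
    pose proof (PP_bound n (xk al K) kk ltac:(lra) ltac:(pose proof (x_upper K); fold kk in H0; lra)) as HP. fold Cn in HP.
    unfold GG. rewrite Cmod_div by apply two_n1_neq0. rewrite Cmod_mult, Cmod_2n1.
    pose proof (pos_INR n). 
    set (nN := Cmod (numN a b n)) in *. assert (HnN : (0 <= nN)%R) by apply Cmod_ge_0.
    apply Rle_trans with (Cmod (PP a b n (xk al K)) * Cmod (base a b n (xk al K)))%R.
    { unfold Rdiv. rewrite <- (Rmult_1_r (Cmod (PP a b n (xk al K)) * Cmod (base a b n (xk al K)))) at 2.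
      apply Rmult_le_compat_l. apply Rmult_le_pos; apply Cmod_ge_0. apply inv_le1. lra. }
    apply Rle_trans with (Cn * (kk * kk) * (16 * nN / (kk * kk * kk * kk)))%R.
    { apply Rmult_le_compat; try apply Cmod_ge_0; auto. }
    unfold D. replace (Cn * (kk * kk) * (16 * nN / (kk * kk * kk * kk)))%R with (16 * Cn * nN / (kk * kk))%R by (field; lra).
    replace (32 * Cn * nN / (kk + 1))%R with (16 * Cn * nN / ((kk + 1) / 2))%R by (field; lra).
    unfold Rdiv. apply Rmult_le_compat_l. nra. apply Rinv_le_contravar; nra. }
  intros eps. destruct (small_tail D eps HD) as [N1 K1].
  exists (max N1 k1). intros K HK. replace (GG a b n (xk al K) - 0) with (GG a b n (xk al K)) by ring.
  eapply Rle_lt_trans. apply Big. lia. apply K1. lia.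
Qed.

End Est3.

Open Scope C_scope.

Lemma pow2_ge d : (INR d + 1 <= 2 ^ d)%R.
Proof. induction d. simpl. lra. rewrite S_INR. simpl. pose proof (pos_INR d). lra. Qed.

Lemma Clim_csum (g : nat -> nat -> C) N : (forall n, Clim_seq (g n) 0) -> Clim_seq (fun K => csum (fun n => g n K) N) 0.
Proof.
  intros H. induction N; simpl.
  - apply Clim_const.
  - replace (RtoC 0) with (RtoC 0 + RtoC 0) by ring. apply Clim_plus; auto.
Qed.

Section WZlim.
Variables al a b : C.
Hypothesis Hg : good a b al.

Definition Fk (n k : nat) : C := FF a b n (xk al k).
Definition Gk (n k : nat) : C := GG a b n (xk al k).

Lemma double_sum N K : csum (Fk 0) K = csum (Fk N) K + csum (fun n => Gk n 0 - Gk n K) N.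
Proof.
  induction N; simpl.
  - ring.
  - rewrite IHN.
    assert (E : csum (Fk N) K = csum (Fk (S N)) K + (Gk N 0 - Gk N K)).
    { assert (T : csum (fun k => Fk N k - Fk (S N) k) K = Gk N 0 - Gk N K).
      { rewrite <- (csum_tele (Gk N) K). apply csum_ext. intros k _. unfold Fk, Gk.
        rewrite FG_tele by (apply good_xk; auto). unfold xk. rewrite natC_S. 
        replace (al + (natC k + 1)) with (al + natC k + 1) by ring. reflexivity. }
      rewrite csum_minus in T. rewrite <- T. ring. }
    rewrite E. ring.
Qed.

Lemma geom_decay N0 : (forall N k, (N0 <= N)%nat -> (Cmod (Fk (S N) k) <= Cmod (Fk N k) / 2)%R) ->
  forall d k, (Cmod (Fk (N0 + d) k) * 2 ^ d <= Cmod (Fk N0 k))%R.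
Proof.
  intros H d k. induction d.
  - rewrite Nat.add_0_r. simpl. lra.
  - rewrite Nat.add_succ_r. pose proof (H (N0 + d)%nat k ltac:(lia)). simpl.
    pose proof (pow_lt 2 d ltac:(lra)). nra.
Qed.

Lemma wz_limit L : Clim_seq (csum (Fk 0)) L -> Clim_seq (csum (fun n => Gk n 0)) L.
Proof.
  intros HL.
  destruct (exists_nat_ge (20 * (Cmod a + Cmod b) + 21 * rho al a b + 2 * Cmod al + 5)) as [N0 HN0].
  assert (Hrat : forall N k, (N0 <= N)%nat -> (Cmod (Fk (S N) k) <= Cmod (Fk N k) / 2)%R).
  { intros N k HN. apply ratio_bound; auto. apply le_INR in HN. lra. }
  destruct (FF_sum_bound al a b Hg N0) as [B HB].
  assert (HB0 : (0 <= B)%R). { pose proof (HB O). simpl in H. lra. }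
  assert (Tail : forall d K, (Cmod (csum (Fk (N0 + d)) K) <= B / (INR d + 1))%R).
  { intros d K. eapply Rle_trans. apply Cmod_csum.
    pose proof (pow2_ge d). pose proof (pos_INR d).
    apply Rle_trans with (rsum (fun k => Cmod (Fk N0 k)) K / 2 ^ d)%R.
    { assert (E : forall K, (rsum (fun k => Cmod (Fk (N0 + d) k)) K * 2 ^ d <= rsum (fun k => Cmod (Fk N0 k)) K)%R).
      { induction K0; simpl. lra. pose proof (geom_decay N0 Hrat d K0). lra. }
      specialize (E K). apply Rmult_le_reg_r with (2 ^ d)%R. lra. unfold Rdiv. rewrite Rmult_assoc, Rinv_l, Rmult_1_r by lra. exact E. }
    unfold Rdiv. apply Rmult_le_compat. apply rsum_nonneg; intros; apply Cmod_ge_0. left; apply Rinv_0_lt_compat; lra.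
    apply HB. apply Rinv_le_contravar; lra. }
  intros eps.
  destruct (small_tail B (pos_div_2 eps) HB0) as [D1 KD].
  exists (N0 + D1)%nat. intros N HN.
  set (d := (N - N0)%nat). assert (HNd : N = (N0 + d)%nat) by (unfold d; lia).
  specialize (KD d ltac:(unfold d; lia)). simpl in KD.
  assert (HG0 : Clim_seq (fun K => csum (fun n => Gk n K) N) 0).
  { apply Clim_csum. intros n. apply GG_lim0; auto. }
  assert (Hle : (Cmod (L - csum (fun n => Gk n 0) N) <= B / (INR d + 1) + eps / 4)%R).
  { apply (Clim_le _ _ _ _ HL).
    destruct (HG0 (mkposreal (eps / 4) ltac:(destruct eps; simpl; lra))) as [K1 HK1].
    exists K1. intros K HK. specialize (HK1 K HK). simpl in HK1. replace (csum (fun n => Gk n K) N - 0) with (csum (fun n => Gk n K) N) in HK1 by ring.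
    rewrite (double_sum N K), csum_minus.
    replace (csum (Fk N) K + (csum (fun n => Gk n 0) N - csum (fun n => Gk n K) N) - csum (fun n => Gk n 0) N)
      with (csum (Fk N) K - csum (fun n => Gk n K) N) by ring.
    eapply Rle_trans. apply Cmod_minus_tri. rewrite HNd at 1. pose proof (Tail d K). lra. }
  rewrite Cmod_sub_sym. destruct eps; simpl in *. lra.
Qed.

End WZlim.

Import ListNotations.
Open Scope C_scope.

Lemma poch_1 n : poch 1 n = natC (fact n).
Proof. induction n. reflexivity. simpl poch. rewrite IHn, fact_S. rewrite Cmult_comm. f_equal. ring. Qed.

Lemma natC_1 : natC 1 = 1.
Proof. unfold natC. simpl. reflexivity. Qed.

Lemma poch_32 n : poch (RtoC (3 / 2)) n * natC (fact n) * Cpow 4 n = natC (fact (2 * n + 1)).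
Proof.
  induction n.
  - simpl. unfold natC. simpl. ring.
  - replace (2 * S n + 1)%nat with (S (S (2 * n + 1))) by lia.
    rewrite !fact_S, <- IHn. simpl poch. simpl Cpow.
    replace (natC (S (2 * n + 1))) with (2 * natC n + 2) by (rewrite natC_S, natC_plus, natC_double, natC_1; ring).
    replace (natC (2 * n + 1)) with (2 * natC n + 1) by (rewrite natC_plus, natC_double, natC_1; ring).
    replace (RtoC (3 / 2)) with (3 / 2 : C) by (rewrite RtoC_div by lra; reflexivity).
    field.
Qed.

Lemma quarter_pow n : Cpow (RtoC (- (1 / 4))) n * Cpow 4 n = sgn n.
Proof.
  induction n. simpl. unfold sgn. simpl. ring.
  unfold sgn in *. simpl. rewrite <- IHn.
  replace (RtoC (- (1 / 4))) with (- (1 / 4) : C) by (rewrite RtoC_opp, RtoC_div by lra; reflexivity).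
  replace (RtoC (-1)) with (- 1 : C) by (apply C_ext; simpl; lra).
  field.
Qed.

Lemma Cpow4_neq0 n : Cpow 4 n <> 0.
Proof. induction n; simpl. intros E; apply (f_equal fst) in E; simpl in E; lra.
  apply Cmult_neq_0; auto. intros E; apply (f_equal fst) in E; simpl in E; lra. Qed.

Section HT.
Variables alpha a b s : C.
Hypothesis Ha1 : ~ nonpos_int (alpha + a).
Hypothesis Ha2 : ~ nonpos_int (alpha - a).
Hypothesis Hb1 : ~ nonpos_int (alpha + b).
Hypothesis Hb2 : ~ nonpos_int (alpha - b).
Hypothesis Hs : s * s = (a * a + b * b) / RtoC 5 - ((1 - alpha) / RtoC 5) * ((1 - alpha) / RtoC 5).
Hypothesis Hp1 : ~ nonpos_int ((2 + 3 * alpha) / RtoC 5 + s).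
Hypothesis Hp2 : ~ nonpos_int ((2 + 3 * alpha) / RtoC 5 - s).

Let be := (2 + 3 * alpha) / RtoC 5.

Lemma R5_neq0 : RtoC 5 <> 0.
Proof. intros E. apply (f_equal fst) in E. simpl in E. lra. Qed.

Lemma PP_s n : PP a b n alpha = 5 * (be + s + natC n) * (be - s + natC n).
Proof.
  pose proof R5_neq0.
  transitivity (5 * ((be + natC n) * (be + natC n) - s * s)). 2: ring.
  rewrite Hs. unfold PP, be. field.
Qed.

Lemma Wq_s : (1 + alpha) * (1 + alpha) + alpha * alpha - a * a - b * b = 5 * (be + s) * (be - s).
Proof.
  pose proof (PP_s 0). unfold PP in H. unfold natC in H. simpl in H.
  replace (be + s) with (be + s + RtoC 0) by ring. replace (be - s) with (be - s + RtoC 0) by ring.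
  rewrite <- H. ring.
Qed.

Definition As := [RtoC 1; RtoC 1; 1 + a + b; 1 + a - b; 1 - a + b; 1 - a - b;
         (7 + 3 * alpha) / RtoC 5 + s; (7 + 3 * alpha) / RtoC 5 - s].
Definition Bs := [RtoC (3 / 2); 1 + alpha + a; 1 + alpha - a; 1 + alpha + b; 1 + alpha - b;
         (2 + 3 * alpha) / RtoC 5 + s; (2 + 3 * alpha) / RtoC 5 - s].

Lemma hyp_term_eq n :
  hyp_term As Bs (RtoC (- (1 / 4))) n =
  (alpha * alpha - a * a) * (alpha * alpha - b * b) / ((1 + alpha) * (1 + alpha) + alpha * alpha - a * a - b * b)
  * Gk alpha a b n 0.
Proof.
  pose proof R5_neq0 as H5.
  unfold hyp_term, prodC, As, Bs. cbn [map fold_right].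
  rewrite !poch_1.
  assert (Es1 : poch ((7 + 3 * alpha) / RtoC 5 + s) n = poch (be + s) n * (be + s + natC n) / (be + s)).
  { replace ((7 + 3 * alpha) / RtoC 5 + s) with (be + s + 1) by (unfold be; field; auto).
    rewrite <- poch_shift. field. pose proof (nonpole_add _ 0 Hp1). unfold natC in H; simpl in H. rewrite Cplus_0_r in H. exact H. }
  assert (Es2 : poch ((7 + 3 * alpha) / RtoC 5 - s) n = poch (be - s) n * (be - s + natC n) / (be - s)).
  { replace ((7 + 3 * alpha) / RtoC 5 - s) with (be - s + 1) by (unfold be; field; auto).
    rewrite <- poch_shift. field. pose proof (nonpole_add _ 0 Hp2). unfold natC in H; simpl in H. rewrite Cplus_0_r in H. exact H. }
  rewrite Es1, Es2.
  assert (E32 : poch (RtoC (3 / 2)) n = natC (fact (2 * n + 1)) / (natC (fact n) * Cpow 4 n)).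
  { rewrite <- poch_32. field. split. apply Cpow4_neq0. apply natC_fact_neq0. }
  rewrite E32.
  assert (Eq4 : Cpow (RtoC (- (1 / 4))) n = sgn n / Cpow 4 n).
  { rewrite <- quarter_pow. field. apply Cpow4_neq0. }
  rewrite Eq4.
  assert (Ef : natC (fact (2 * n + 1)) = natC (fact (2 * n)) * (2 * natC n + 1)).
  { replace (2 * n + 1)%nat with (S (2 * n)) by lia. rewrite fact_S, natC_double. ring. }
  rewrite Ef.
  unfold Gk, GG, base, fourN, denD, xk.
  replace (alpha + natC 0) with alpha by (unfold natC; simpl; ring).
  rewrite PP_s, Wq_s.
  rewrite (poch_S_l (alpha + a)), (poch_S_l (alpha - a)), (poch_S_l (alpha + b)), (poch_S_l (alpha - b)).
  replace (1 + alpha + a) with (alpha + a + 1) by ring. replace (1 + alpha - a) with (alpha - a + 1) by ring.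
  replace (1 + alpha + b) with (alpha + b + 1) by ring. replace (1 + alpha - b) with (alpha - b + 1) by ring.
  fold be.
  pose proof (nonpole_add _ 0 Hp1) as B1. pose proof (nonpole_add _ 0 Hp2) as B2.
  unfold natC in B1, B2; simpl in B1, B2. rewrite Cplus_0_r in B1, B2. fold be in B1, B2.
  assert (P1 : poch (be + s) n <> 0) by (apply poch_neq0; intros; apply nonpole_add; auto).
  assert (P2 : poch (be - s) n <> 0) by (apply poch_neq0; intros; apply nonpole_add; auto).
  pose proof (poch1_neq0 _ n Ha1). pose proof (poch1_neq0 _ n Ha2). pose proof (poch1_neq0 _ n Hb1). pose proof (poch1_neq0 _ n Hb2).
  pose proof (w_neq0 _ Ha1). pose proof (w_neq0 _ Ha2). pose proof (w_neq0 _ Hb1). pose proof (w_neq0 _ Hb2).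
  pose proof (natC_fact_neq0 n). pose proof (natC_fact_neq0 (2 * n)). pose proof (Cpow4_neq0 n). pose proof (two_n1_neq0 n).
  field. repeat split; auto.
Qed.

End HT.

Import ListNotations.
Open Scope C_scope.

Lemma sum_n_csum (f : nat -> C) N : @sum_n C_AbelianMonoid f N = csum f (S N).
Proof.
  induction N.
  - rewrite sum_O. simpl. ring.
  - rewrite sum_Sn, IHN. simpl. reflexivity.
Qed.

Lemma f_eq a b x : x + a <> 0 -> x - a <> 0 -> x + b <> 0 -> x - b <> 0 ->
  (a * a - b * b) / 2 * FF a b 0 x = / (x + a) + / (x - a) - / (x + b) - / (x - b).
Proof.
  intros H1 H2 H3 H4. unfold FF, base, sgn, fourN, denD. simpl.
  unfold natC. simpl. field. repeat split; auto.
  all: try (intros E; apply (f_equal fst) in E; simpl in E; lra).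
  all: rewrite Cplus_0_r; auto.
Qed.

Theorem theorem6 (alpha a b s : C) :
  ~ nonpos_int (alpha + a) -> ~ nonpos_int (alpha - a) ->
  ~ nonpos_int (alpha + b) -> ~ nonpos_int (alpha - b) ->
  s * s = (a * a + b * b) / RtoC 5 - ((1 - alpha) / RtoC 5) * ((1 - alpha) / RtoC 5) ->
  ~ nonpos_int ((2 + 3 * alpha) / RtoC 5 + s) ->
  ~ nonpos_int ((2 + 3 * alpha) / RtoC 5 - s) ->
  digamma (alpha + b) + digamma (alpha - b) - digamma (alpha + a) - digamma (alpha - a)
  = (a * a - b * b) * ((1 + alpha) * (1 + alpha) + alpha * alpha - a * a - b * b)
    / (2 * (alpha * alpha - a * a) * (alpha * alpha - b * b))
    * hypergeom
        [RtoC 1; RtoC 1; 1 + a + b; 1 + a - b; 1 - a + b; 1 - a - b;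
         (7 + 3 * alpha) / RtoC 5 + s; (7 + 3 * alpha) / RtoC 5 - s]
        [RtoC (3 / 2); 1 + alpha + a; 1 + alpha - a; 1 + alpha + b; 1 + alpha - b;
         (2 + 3 * alpha) / RtoC 5 + s; (2 + 3 * alpha) / RtoC 5 - s]
        (RtoC (- (1 / 4))).
Proof.
  intros Ha1 Ha2 Hb1 Hb2 Hs Hp1 Hp2.
  assert (Hg : good a b alpha).
  { intros m. repeat split; apply nonpole_add; auto. }
  destruct (digamma_formula _ Hb1) as [C1 [HC1 E1]].
  destruct (digamma_formula _ Hb2) as [C2 [HC2 E2]].
  destruct (digamma_formula _ Ha1) as [C3 [HC3 E3]].
  destruct (digamma_formula _ Ha2) as [C4 [HC4 E4]].
  set (K0 := / (alpha + b) + / (alpha - b) - / (alpha + a) - / (alpha - a)).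
  set (del := (a * a - b * b) / 2).
  set (Dl := digamma (alpha + b) + digamma (alpha - b) - digamma (alpha + a) - digamma (alpha - a)).
  assert (HDl : Clim_seq (fun n => csum (cterm (alpha + b)) n + csum (cterm (alpha - b)) n - csum (cterm (alpha + a)) n - csum (cterm (alpha - a)) n - K0) Dl).
  { unfold Dl. rewrite E1, E2, E3, E4.
    replace (C1 - / (alpha + b) + (C2 - / (alpha - b)) - (C3 - / (alpha + a)) - (C4 - / (alpha - a))) with (C1 + C2 - C3 - C4 - K0) by (unfold K0; ring).
    apply Clim_minus; [|apply Clim_const]. repeat apply Clim_minus; try apply Clim_plus; auto. }
  assert (Hcomb : forall n, csum (cterm (alpha + b)) n + csum (cterm (alpha - b)) n - csum (cterm (alpha + a)) n - csum (cterm (alpha - a)) n - K0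
                   = del * csum (Fk alpha a b 0) (S n)).
  { assert (Hf : forall k, del * Fk alpha a b 0 k = / (xk alpha k + a) + / (xk alpha k - a) - / (xk alpha k + b) - / (xk alpha k - b)).
    { intros k. unfold del, Fk. pose proof (good_xk alpha a b Hg k) as G. destruct (G O) as [G1 [G2 [G3 G4]]].
      unfold natC in G1, G2, G3, G4. simpl in G1, G2, G3, G4. rewrite Cplus_0_r in G1, G2, G3, G4.
      apply f_eq; auto. }
    induction n.
    - simpl csum. replace (del * (0 + Fk alpha a b 0 0)) with (del * Fk alpha a b 0 0) by ring. rewrite Hf. unfold K0, xk. replace (alpha + natC 0) with alpha by (unfold natC; simpl; ring). ring.
    - assert (Ec : forall f m, csum f (S m) = csum f m + f m) by reflexivity.
      rewrite (Ec (Fk alpha a b 0) (S n)), (Ec (cterm (alpha + b)) n), (Ec (cterm (alpha - b)) n), (Ec (cterm (alpha + a)) n), (Ec (cterm (alpha - a)) n).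
      rewrite Cmult_plus_distr_l, <- IHn, Hf. unfold cterm, xk.
      replace (alpha + b + RtoC (kR n)) with (alpha + natC (S n) + b) by (rewrite kR_natC, natC_S; ring).
      replace (alpha - b + RtoC (kR n)) with (alpha + natC (S n) - b) by (rewrite kR_natC, natC_S; ring).
      replace (alpha + a + RtoC (kR n)) with (alpha + natC (S n) + a) by (rewrite kR_natC, natC_S; ring).
      replace (alpha - a + RtoC (kR n)) with (alpha + natC (S n) - a) by (rewrite kR_natC, natC_S; ring).
      ring. }
  assert (HDl' : Clim_seq (fun n => del * csum (Fk alpha a b 0) (S n)) Dl) by (eapply Clim_ext; [exact Hcomb|exact HDl]).
  fold Dl.
  destruct (classic (a * a - b * b = 0)) as [Z|NZ].
  - assert (Dl = 0).
    { apply (Clim_unique _ _ _ HDl'). eapply Clim_ext. 2: apply Clim_const. intros n. unfold del. rewrite Z. simpl. 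
      replace (0 / 2) with (RtoC 0) by (field; intros E; apply (f_equal fst) in E; simpl in E; lra). ring. }
    rewrite H, Z. unfold Cdiv. ring.
  - assert (Hdel : del <> 0).
    { unfold del. intros E. apply NZ. replace (a * a - b * b) with ((a * a - b * b) / 2 * 2) by (field; intros E'; apply (f_equal fst) in E'; simpl in E'; lra). rewrite E. ring. }
    assert (HF : Clim_seq (csum (Fk alpha a b 0)) (Dl / del)).
    { replace (Dl / del) with (/ del * Dl) by (unfold Cdiv; ring). apply Clim_shift. eapply Clim_ext. 2: apply (Clim_scal (/ del) _ _ HDl'). intros n. simpl. field. auto. 
      }
    pose proof (wz_limit alpha a b Hg _ HF) as HG.
    set (Wq := (1 + alpha) * (1 + alpha) + alpha * alpha - a * a - b * b).
    set (Wp := (alpha * alpha - a * a) * (alpha * alpha - b * b) / Wq).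
    assert (Hhyp : hypergeom (As alpha a b s) (Bs alpha a b s) (RtoC (- (1 / 4))) = Wp * (Dl / del)).
    { unfold hypergeom. apply lim_seq_C.
      apply (Clim_ext (fun N => Wp * csum (fun n => Gk alpha a b n 0) (S N))).
      { intros N. rewrite sum_n_csum, <- csum_scal. apply csum_ext. intros k _. unfold Wp, Wq. symmetry. apply hyp_term_eq; auto. }
      apply (Clim_shift' (fun M => Wp * csum (fun n => Gk alpha a b n 0) M)). apply Clim_scal. exact HG. }
    change [RtoC 1; RtoC 1; 1 + a + b; 1 + a - b; 1 - a + b; 1 - a - b; (7 + 3 * alpha) / RtoC 5 + s; (7 + 3 * alpha) / RtoC 5 - s] with (As alpha a b s).
    change [RtoC (3 / 2); 1 + alpha + a; 1 + alpha - a; 1 + alpha + b; 1 + alpha - b; (2 + 3 * alpha) / RtoC 5 + s; (2 + 3 * alpha) / RtoC 5 - s] with (Bs alpha a b s).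
    rewrite Hhyp. fold Wq.
    assert (HWq : Wq <> 0).
    { unfold Wq. rewrite (Wq_s alpha a b s Hs).
      pose proof (nonpole_add _ 0 Hp1) as B1. pose proof (nonpole_add _ 0 Hp2) as B2.
      unfold natC in B1, B2; simpl in B1, B2. rewrite Cplus_0_r in B1, B2.
      repeat apply Cmult_neq_0; auto. intros E; apply (f_equal fst) in E; simpl in E; lra. }
    pose proof (w_neq0 _ Ha1). pose proof (w_neq0 _ Ha2). pose proof (w_neq0 _ Hb1). pose proof (w_neq0 _ Hb2).
    assert (alpha * alpha - a * a <> 0) by (replace (alpha * alpha - a * a) with ((alpha + a) * (alpha - a)) by ring; apply Cmult_neq_0; auto).
    assert (alpha * alpha - b * b <> 0) by (replace (alpha * alpha - b * b) with ((alpha + b) * (alpha - b)) by ring; apply Cmult_neq_0; auto).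
    unfold Wp, del in *. field. repeat split; auto.
Qed.
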